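(* The collinearity graph of $\mathcal{S}$ is connected and has diameter $3$.
   Context: Let $S=(P,L)$ and $S'=(P',L')$ be generalized quadrangles of order $(2,2)$ (every line has 3 points, every point lies on 3 lines, and for each point $x$ and line $l\not\ni x$ exactly one point of $l$ is collinear with $x$), with an isomorphism $x\mapsto x'$ from $S$ to $S'$. In a point-line geometry, $x^{\perp}$ is $x$ together with all points collinear with $x$, and $A^{\perp}=\bigcap_{a\in A}a^{\perp}$. A triad is a set of three pairwise non-collinear points, complete if $|T^{\perp}|=3$. The geometry $\mathcal{S}=(\mathcal{P},\mathcal{L})$ has point set $\mathcal{P}=\{(x,y')\in P\times P':y'\in x'^{\perp}\}$ and lines all $3$-subsets $\{(x,u'),(y,v'),(z,w')\}$ of $\mathcal{P}$ where $T=\{x,y,z\}$ (three distinct points) is a line or a complete triad of $S$ and $\{u',v',w'\}=T'^{\perp}$ in $S'$ with $u',v',w'$ distinct. The collinearity graph has vertex set $\mathcal{P}$, two distinct points adjacent when they lie on a common line. *)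

(* Defs.v *)
From mathcomp Require Import all_boot.
Set Implicit Arguments. Unset Strict Implicit. Unset Printing Implicit Defensive.

Section Geometry.
Variable P : finType.
Variable L : {set {set P}}.

Definition collinear (x y : P) : bool := [exists l in L, (x \in l) && (y \in l)].

Definition perp (x : P) : {set P} := [set y | (y == x) || collinear x y].

Definition perpS (A : {set P}) : {set P} := \bigcap_(a in A) perp a.

Definition triad (T : {set P}) : bool :=
  (#|T| == 3) && [forall x in T, forall y in T, (x != y) ==> ~~ collinear x y].

Definition complete_triad (T : {set P}) : bool := triad T && (#|perpS T| == 3).

Definition is_GQ22 : Prop :=
  [/\ 0 < #|P|,
      forall l, l \in L -> #|l| = 3,
      forall x : P, #|[set l in L | x \in l]| = 3 &
      forall (x : P) l, l \in L -> x \notin l -> #|[set y in l | collinear x y]| = 1].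
End Geometry.

Definition is_iso (P P' : finType) (L : {set {set P}}) (L' : {set {set P'}}) (f : P -> P') : Prop :=
  bijective f /\ L' = [set f @: (l : {set P}) | l in L].

Section Construction.
Variables (P P' : finType) (L : {set {set P}}) (L' : {set {set P'}}) (f : P -> P').

Definition calP_pred (p : P * P') : bool := p.2 \in perp L' (f p.1).
Definition calP : finType := {p : P * P' | calP_pred p}.

(* lines: 3-subsets {(x,u'),(y,v'),(z,w')} with T = {x,y,z} three distinct points forming
   a line or a complete triad of S, and {u',v',w'} = T'^perp with u',v',w' distinct *)
Definition is_calLine (Lc : {set calP}) : bool :=
  [exists a : calP, exists b : calP, exists c : calP,
    let x := (val a).1 in let y := (val b).1 in let z := (val c).1 in
    let u := (val a).2 in let v := (val b).2 in let w := (val c).2 in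
    let T := [set x; y; z] in
    [&& Lc == [set a; b; c], x != y, y != z, x != z,
        (T \in L) || complete_triad L T,
        u != v, v != w, u != w &
        [set u; v; w] == perpS L' (f @: T)]].

Definition calAdj : rel calP :=
  fun a b => (a != b) && [exists Lc : {set calP}, [&& is_calLine Lc, a \in Lc & b \in Lc]].

Definition within (k : nat) (a b : calP) : Prop :=
  exists s : seq calP, size s <= k /\ path calAdj a s /\ last a s = b.
End Construction.

Arguments calP_pred {P P'} L' f p.
Arguments calP {P P'} L' f.
Arguments is_calLine {P P'} L L' f Lc.
Arguments calAdj {P P'} L L' f.
Arguments within {P P'} L L' f k a b.

(* Main.v *)
Require Import Defs.
From mathcomp Require Import all_boot.
Set Implicit Arguments. Unset Strict Implicit. Unset Printing Implicit Defensive.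

Section Set3.
Variable T : finType.
Lemma set3C12 (x y z : T) : [set y; x; z] = [set x; y; z].
Proof. by apply/setP => w; rewrite !inE (orbC (w == y)). Qed.
Lemma set3C23 (x y z : T) : [set x; z; y] = [set x; y; z].
Proof. by apply/setP => w; rewrite !inE -!orbA (orbC (w == z)). Qed.
Lemma card_set3 (x y z : T) : x != y -> y != z -> x != z -> #|[set x; y; z]| = 3.
Proof.
move=> xy yz xz.
have -> : [set x; y; z] = x |: [set y; z] by apply/setP=> w; rewrite !inE orbA.
by rewrite cardsU1 cards2 !inE negb_or xy xz yz.
Qed.
Lemma set3_eq (A : {set T}) x y z : #|A| = 3 -> x \in A -> y \in A -> z \in A ->
  x != y -> y != z -> x != z -> A = [set x; y; z].
Proof.
move=> HA xA yA zA xy yz xz; apply/eqP; rewrite eq_sym eqEcard card_set3 // HA leqnn andbT.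
by apply/subsetP => w; rewrite !inE => /orP[/orP[]|] /eqP->.
Qed.
Lemma set3_neq (x y z : T) : #|[set x; y; z]| = 3 -> [/\ x != y, y != z & x != z].
Proof.
move=> H; split; apply/negP => /eqP E; move: H; rewrite E.
- have -> : [set y; y; z] = [set y; z] by apply/setP=> w; rewrite !inE orbb.
  by rewrite cards2; case: (y != z).
- have -> : [set x; z; z] = [set x; z] by apply/setP=> w; rewrite !inE -orbA orbb.
  by rewrite cards2; case: (x != z).
- have -> : [set z; y; z] = [set z; y] by apply/setP=> w; rewrite !inE orbC orbA orbb.
  by rewrite cards2; case: (z != y).
Qed.
End Set3.

Definition WLidx : seq (nat * (nat * nat)) :=
  [:: (0, (9, 14)); (0, (10, 13)); (0, (11, 12)); (1, (6, 14)); (1, (7, 13)); (1, (8, 12)); (2, (5, 14)); (2, (7, 11)); (2, (8, 10)); (3, (5, 13)); (3, (6, 11)); (3, (8, 9)); (4, (5, 12)); (4, (6, 10)); (4, (7, 9))].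

Section GQ.
Variable P : finType.
Variable L : {set {set P}}.
Hypothesis HGQ : is_GQ22 L.

Local Notation col := (collinear L).
Definition ln (x y z : P) := [set x; y; z] \in L.
Arguments ln : simpl never.

Lemma line3 l : l \in L -> #|l| = 3.
Proof. by case: HGQ => _ H _ _; apply: H. Qed.
Lemma axGQ x l : l \in L -> x \notin l -> #|[set y in l | col x y]| = 1.
Proof. by case: HGQ => _ _ _ H; apply: H. Qed.
Lemma lines_at x : #|[set l in L | x \in l]| = 3.
Proof. by case: HGQ => _ _ H _; apply: H. Qed.

Lemma colP x y : reflect (exists2 l, l \in L & (x \in l) && (y \in l)) (col x y).
Proof.
apply: (iffP existsP) => [[l /andP[H1 H2]]|[l H1 H2]]; first by exists l.
by exists l; rewrite H1.
Qed.
Lemma colC x y : col x y -> col y x.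
Proof. by case/colP => l Hl /andP[a b]; apply/colP; exists l; rewrite ?b ?a. Qed.
Lemma ncolC x y : ~~ col x y -> ~~ col y x.
Proof. by apply: contra; apply: colC. Qed.
Lemma neqC (x y : P) : x != y -> y != x.
Proof. by rewrite eq_sym. Qed.
Lemma col_refl x : col x x.
Proof.
have : 0 < #|[set l in L | x \in l]| by rewrite lines_at.
case/card_gt0P => l; rewrite inE => /andP[Hl Hx].
by apply/colP; exists l; rewrite ?Hx.
Qed.
Lemma ncol_neq x y : ~~ col x y -> x != y.
Proof. by apply: contra => /eqP->; apply: col_refl. Qed.
Lemma colncol_neq x y z : col x y -> ~~ col y z -> x != z.
Proof. by move=> H; apply: contra => /eqP E; rewrite -E colC. Qed.

Lemma ln_12 x y z : ln x y z -> ln y x z.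
Proof. by rewrite /ln set3C12. Qed.
Lemma ln_23 x y z : ln x y z -> ln x z y.
Proof. by rewrite /ln set3C23. Qed.
Lemma ln_neq12 x y z : ln x y z -> x != y.
Proof. by move/line3/set3_neq => []. Qed.
Lemma ln_col12 x y z : ln x y z -> col x y.
Proof. by move=> H; apply/colP; exists [set x; y; z]; rewrite // !inE !eqxx ?orbT. Qed.

Lemma tri x y z w : ln x y z -> col w x -> col w y -> w \in [set x; y; z].
Proof.
move=> Hl Hx Hy; apply/negPn/negP => Hw.
have := axGQ Hl Hw; move/eqP; apply/negP; rewrite neq_ltn; apply/orP; right.
apply/card_gt1P; exists x, y; rewrite !inE !eqxx ?orbT Hx Hy /=; split => //.
exact: ln_neq12 Hl.
Qed.
Lemma tri_ncol x y z w : ln x y z -> col w x -> w != x -> w != y -> w != z -> ~~ col w y.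
Proof.
move=> Hl Hx wx wy wz; apply/negP => Hy.
by move: (tri Hl Hx Hy); rewrite !inE (negbTE wx) (negbTE wy) (negbTE wz).
Qed.
Lemma proj3 x y z w : ln x y z -> [|| col w x, col w y | col w z].
Proof.
move=> Hl; case: (boolP (w \in [set x; y; z])) => Hw.
  by move: Hw; rewrite !inE => /orP[/orP[]|] /eqP->; rewrite col_refl ?orbT.
have : 0 < #|[set v in [set x; y; z] | col w v]| by rewrite axGQ.
case/card_gt0P => v; rewrite !inE => /andP[/orP[/orP[]|] /eqP-> ->]; by rewrite ?orbT.
Qed.
Lemma proj_col x y z w : ln x y z -> ~~ col w y -> ~~ col w z -> col w x.
Proof. by move=> /(proj3 w) /orP[//|/orP[]] H /negP N1 /negP N2; [case: N1|case: N2]. Qed.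
Lemma mk_ln x y w : col x y -> x != y -> col w x -> col w y -> w != x -> w != y -> ln x y w.
Proof.
case/colP => l Hl /andP[xl yl] xy Hx Hy wx wy.
have wl : w \in l.
  apply/negPn/negP => Hw; have := axGQ Hl Hw; move/eqP; apply/negP.
  rewrite neq_ltn; apply/orP; right; apply/card_gt1P; exists x, y.
  by rewrite !inE xl yl Hx Hy.
by rewrite /ln -(set3_eq (line3 Hl) xl yl wl xy) // eq_sym.
Qed.
Lemma line_of x y : col x y -> x != y -> exists z, ln x y z.
Proof.
case/colP => l Hl /andP[xl yl] xy.
have : [set x; y] \proper l.
  rewrite properEcard cards2 xy line3 // andbT.
  by apply/subsetP => w; rewrite !inE => /orP[] /eqP->.
case/properP => _ [z zl]; rewrite !inE negb_or => /andP[zx zy].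
by exists z; rewrite /ln -(set3_eq (line3 Hl) xl yl zl xy) // 1?eq_sym.
Qed.
Lemma line_uniq l m x y : l \in L -> m \in L -> x != y -> x \in l -> y \in l ->
  x \in m -> y \in m -> l = m.
Proof.
move=> Hl Hm xy xl yl xm ym; apply/eqP; rewrite eqEcard (line3 Hl) (line3 Hm) leqnn andbT.
apply/subsetP => z zl; apply/negPn/negP => zm.
have := axGQ Hm zm; move/eqP; apply/negP; rewrite neq_ltn; apply/orP; right.
apply/card_gt1P; exists x, y; rewrite !inE xm ym xy; split=> //; apply/colP.
  by exists l; rewrite ?zl ?xl.
by exists l; rewrite ?zl ?yl.
Qed.
Lemma new_line x (S : {set {set P}}) : #|S| < 3 ->
  exists c1 c2, ln x c1 c2 /\ [set x; c1; c2] \notin S.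
Proof.
move=> HS.
have : ~~ ([set l in L | x \in l] \subset S).
  apply/negP => /subset_leq_card; rewrite lines_at; move: HS.
  by case: #|S| => [|[|[|]]].
case/subsetPn => l; rewrite inE => /andP[Hl xl] lS.
have : [set x] \proper l by rewrite properEcard cards1 line3 // andbT sub1set.
case/properP => _ [c1 c1l]; rewrite inE => c1x.
have : [set x; c1] \proper l.
  rewrite properEcard cards2 eq_sym c1x line3 // andbT.
  by apply/subsetP => w; rewrite !inE => /orP[] /eqP->.
case/properP => _ [c2 c2l]; rewrite !inE negb_or => /andP[c2x c2c1].
have E := set3_eq (line3 Hl) xl c1l c2l; rewrite eq_sym in c1x.
rewrite E // 1?eq_sym // in Hl lS.
by exists c1, c2.
Qed.
Lemma lines_meet x y l m : l \in L -> m \in L -> l != m -> x \in l -> x \in m ->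
  y \in l -> y \in m -> y = x.
Proof.
move=> Hl Hm lm xl xm yl ym; apply/eqP; apply/negP => /negP yx.
by move/eqP: lm; apply; apply: (line_uniq Hl Hm yx).
Qed.

Lemma new_lineS x (S : {set {set P}}) : #|S| < 3 -> {subset S <= [set l in L | x \in l]} ->
  exists c1 c2, ln x c1 c2 /\ forall l, l \in S -> (c1 \notin l) && (c2 \notin l).
Proof.
move=> HS sub; have [c1 [c2 [Hl nS]]] := new_line x HS.
exists c1, c2; split => // l lS.
have /setIdP[lL xl] := sub l lS.
have ne : [set x; c1; c2] != l by apply: contraNneq nS => ->.
have [x1 _ x2] := set3_neq (line3 Hl).
apply/andP; split; apply/negP => cl.
  move: (lines_meet Hl lL ne (x := x) (y := c1)); rewrite !inE !eqxx ?orbT => /(_ isT xl isT cl) E.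
  by rewrite E eqxx in x1.
move: (lines_meet Hl lL ne (x := x) (y := c2)); rewrite !inE !eqxx ?orbT => /(_ isT xl isT cl) E.
by rewrite E eqxx in x2.
Qed.
Lemma ln_at x a1 a2 : ln x a1 a2 -> [set x; a1; a2] \in [set l in L | x \in l].
Proof. by move=> H; rewrite inE; apply/andP; split; [exact: H | rewrite !inE eqxx]. Qed.
Lemma new_line1 x : exists c1 c2, ln x c1 c2.
Proof.
have h1 : #|(set0 : {set {set P}})| < 3 by rewrite cards0.
have h2 : {subset (set0 : {set {set P}}) <= [set l in L | x \in l]} by move=> l; rewrite in_set0.
have [c1 [c2 [H _]]] := new_lineS h1 h2.
by exists c1, c2.
Qed.
Lemma new_line2 x a1 a2 : ln x a1 a2 ->
  exists c1 c2, ln x c1 c2 /\ (c1 \notin [set a1; a2]) && (c2 \notin [set a1; a2]).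
Proof.
move=> Ha.
have h1 : #|[set [set x; a1; a2]]| < 3 by rewrite cards1.
have h2 : {subset [set [set x; a1; a2]] <= [set l in L | x \in l]}.
  by move=> l; rewrite inE => /eqP->; apply: ln_at.
have [c1 [c2 [H N]]] := new_lineS h1 h2.
exists c1, c2; split => //.
have /andP[] := N _ (set11 [set x; a1; a2]); rewrite !inE !negb_or.
by move=> /andP[/andP[_ ->] ->] /andP[/andP[_ ->] ->].
Qed.
Lemma new_line3 x a1 a2 b1 b2 : ln x a1 a2 -> ln x b1 b2 ->
  exists c1 c2, ln x c1 c2 /\ (c1 \notin [set a1; a2; b1; b2]) && (c2 \notin [set a1; a2; b1; b2]).
Proof.
move=> Ha Hb.
have h1 : #|[set [set x; a1; a2]; [set x; b1; b2]]| < 3 by rewrite cards2; case: (_ != _).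
have h2 : {subset [set [set x; a1; a2]; [set x; b1; b2]] <= [set l in L | x \in l]}.
  by move=> l /set2P[]->; apply: ln_at.
have [c1 [c2 [H N]]] := new_lineS h1 h2.
exists c1, c2; split => //.
have m1 : [set x; a1; a2] \in [set [set x; a1; a2]; [set x; b1; b2]] by rewrite !inE eqxx.
have m2 : [set x; b1; b2] \in [set [set x; a1; a2]; [set x; b1; b2]] by rewrite !inE eqxx orbT.
move: (N _ m1) (N _ m2) => /andP[] + + /andP[].
rewrite !inE !negb_or.
by move=> /andP[/andP[_ ->] ->] /andP[/andP[_ ->] ->] /andP[/andP[_ ->] ->] /andP[/andP[_ ->] ->].
Qed.

Lemma quadrangle : 0 < #|P| -> exists a b c d,
  [/\ col a b, col b c, col c d & col d a] /\ [/\ a != b, b != c, c != d & d != a] /\ (~~ col a c /\ ~~ col b d).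
Proof.
case/card_gt0P => a _.
have [b [e Hab]] := new_line1 a.
have [c [c' [Hbc /andP[cN c'N]]]] := new_line2 (ln_12 Hab).
move: cN; rewrite !inE negb_or => /andP[ca ce].
have Hca : ~~ col c a.
  apply: (tri_ncol (ln_12 Hab)) => //; first exact: colC (ln_col12 Hbc).
  by rewrite eq_sym (ln_neq12 Hbc).
have [m1 [m2 [Hcm /andP[m1N m2N]]]] := new_line2 (ln_12 Hbc).
move: m1N m2N; rewrite !inE !negb_or => /andP[m1b m1c'] /andP[m2b m2c'].
have Hac := ncolC Hca.
have fin : forall d, col c d -> c != d -> d != b -> d != c' -> col a d -> exists a0 b0 c0 d0,
  [/\ col a0 b0, col b0 c0, col c0 d0 & col d0 a0] /\ [/\ a0 != b0, b0 != c0, c0 != d0 & d0 != a0] /\ (~~ col a0 c0 /\ ~~ col b0 d0).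
  move=> d Hcd cd db dc' Had; exists a, b, c, d; split; [split|split; [split|split]].
  - exact: ln_col12 Hab.
  - exact: ln_col12 Hbc.
  - exact: Hcd.
  - exact: colC.
  - exact: ln_neq12 Hab.
  - exact: ln_neq12 Hbc.
  - exact: cd.
  - exact: colncol_neq (colC Hcd) Hca.
  - exact: Hac.
  apply: ncolC; apply: (tri_ncol (ln_12 Hbc)) => //; first exact: colC.
  by rewrite eq_sym.
case/or3P: (proj3 a Hcm) => H; first by rewrite H in Hac.
  by apply: (fin m1) => //; [exact: ln_col12 Hcm | exact: ln_neq12 Hcm].
by apply: (fin m2) => //; [exact: ln_col12 (ln_23 Hcm) | exact: ln_neq12 (ln_23 Hcm)].
Qed.

Lemma complete x a1 a2 b1 b2 c1 c2 y : ln x a1 a2 -> ln x b1 b2 -> ln x c1 c2 ->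
  a1 \notin [set b1; b2] -> a1 \notin [set c1; c2] -> b1 \notin [set c1; c2] ->
  col x y -> y \in [:: x; a1; a2; b1; b2; c1; c2].
Proof.
move=> Ha Hb Hc n1 n2 n3 Hy.
have [xa1 _ _] := set3_neq (line3 Ha).
have [xb1 _ _] := set3_neq (line3 Hb).
have ne : forall u v w p q, u \in [set x; v; w] -> u != x -> u \notin [set p; q] ->
   [set x; v; w] != [set x; p; q].
  move=> u v w p q uin ux un; apply/negP => /eqP E; move: uin; rewrite E !inE.
  by rewrite (negbTE ux) /=; move: un; rewrite !inE => /negbTE ->.
have E : [set l in L | x \in l] = [set [set x; a1; a2]; [set x; b1; b2]; [set x; c1; c2]].
  apply: set3_eq; [exact: lines_at | exact: ln_at Ha | exact: ln_at Hb | exact: ln_at Hc | | |].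
  - by apply: (ne a1) => //; [rewrite !inE eqxx orbT | rewrite eq_sym].
  - by apply: (ne b1) => //; [rewrite !inE eqxx orbT | rewrite eq_sym].
  - by apply: (ne a1) => //; [rewrite !inE eqxx orbT | rewrite eq_sym].
case: (eqVneq y x) => [->|yx]; first by rewrite inE eqxx.
case/colP: Hy => l Hl /andP[xl yl].
have : l \in [set l in L | x \in l] by rewrite inE Hl xl.
rewrite E !inE => /orP[/orP[]|] /eqP El; move: yl; rewrite El !inE;
  by case/orP => [/orP[]|] ->; rewrite ?orbT.
Qed.

Lemma notin2 (c a b : P) : c != a -> c != b -> c \notin [set a; b].
Proof. by move=> H1 H2; rewrite !inE negb_or H1 H2. Qed.
Lemma notin4 (c a1 a2 b1 b2 : P) : c \notin [set a1; a2; b1; b2] ->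
  [/\ c != a1, c != a2, c != b1 & c != b2].
Proof. by rewrite !inE !negb_or => /andP[/andP[/andP[-> ->] ->] ->]. Qed.
Lemma mem_sub (s1 s2 : seq P) y : y \in s1 -> all (mem s2) s1 -> y \in s2.
Proof. by move=> H /allP; apply. Qed.

Lemma derive (p12 p34 p15 p36 : P) : col p12 p34 -> col p34 p15 -> col p15 p36 -> col p36 p12 -> p12 != p34 -> p34 != p15 -> p15 != p36 -> p36 != p12 -> ~~ col p12 p15 -> ~~ col p34 p36 ->
  exists s : seq P, [/\ size s = 15, uniq s, (forall y, y \in s) &
    all (fun t => ln (nth p12 s t.1) (nth p12 s t.2.1) (nth p12 s t.2.2)) WLidx].
Proof.
move=> Hc0 Hc1 Hc2 Hc3 Hd0 Hd1 Hd2 Hd3 Hn0 Hn1.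
have H1 : p12 != p15 := ncol_neq Hn0.
have H2 : p34 != p36 := ncol_neq Hn1.
have [p56 H3] := line_of Hc0 Hd0.
have H4 : col p12 p56 := ln_col12 (ln_23 H3).
have H5 : p12 != p56 := ln_neq12 (ln_23 H3).
have H6 : col p34 p56 := ln_col12 (ln_23 (ln_12 H3)).
have H7 : p34 != p56 := ln_neq12 (ln_23 (ln_12 H3)).
have H8 : p56 != p15 := colncol_neq (colC H4) Hn0.
have H9 : p56 != p36 := colncol_neq (colC H6) Hn1.
have H10 : ~~ col p36 p56 := tri_ncol (ln_23 H3) Hc3 Hd3 (neqC H9) (neqC H2).
have H11 : ~~ col p15 p56 := tri_ncol (ln_23 (ln_12 H3)) (colC Hc1) (neqC Hd1) (neqC H8) (neqC H1).
have [p45 H12] := line_of Hc3 Hd3.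
have H13 : col p36 p45 := ln_col12 (ln_23 H12).
have H14 : p36 != p45 := ln_neq12 (ln_23 H12).
have H15 : col p12 p45 := ln_col12 (ln_23 (ln_12 H12)).
have H16 : p12 != p45 := ln_neq12 (ln_23 (ln_12 H12)).
have H17 : p45 != p15 := colncol_neq (colC H15) Hn0.
have H18 : p45 != p34 := colncol_neq (colC H13) (ncolC Hn1).
have H19 : p45 != p56 := colncol_neq (colC H13) H10.
have H20 : ~~ col p45 p34 := tri_ncol H3 (colC H15) (neqC H16) H18 H19.
have H21 : ~~ col p45 p56 := tri_ncol (ln_23 H3) (colC H15) (neqC H16) H19 H18.
have H22 : ~~ col p15 p45 := tri_ncol (ln_23 H12) Hc2 Hd2 (neqC H17) (neqC H1).
have [p26 H23] := line_of Hc1 Hd1.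
have H24 : col p34 p26 := ln_col12 (ln_23 H23).
have H25 : p34 != p26 := ln_neq12 (ln_23 H23).
have H26 : col p15 p26 := ln_col12 (ln_23 (ln_12 H23)).
have H27 : p15 != p26 := ln_neq12 (ln_23 (ln_12 H23)).
have H28 : p26 != p36 := colncol_neq (colC H24) Hn1.
have H29 : p26 != p45 := colncol_neq (colC H24) (ncolC H20).
have H30 : p26 != p12 := colncol_neq (colC H26) (ncolC Hn0).
have H31 : p26 != p56 := colncol_neq (colC H26) H11.
have H32 : ~~ col p26 p12 := tri_ncol (ln_12 H3) (colC H24) (neqC H25) H30 H31.
have H33 : ~~ col p26 p56 := tri_ncol (ln_23 (ln_12 H3)) (colC H24) (neqC H25) H31 H30.
have H34 : ~~ col p36 p26 := tri_ncol (ln_23 (ln_12 H23)) (colC Hc2) (neqC Hd2) (neqC H28) (neqC H2).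
have H35 : col p45 p26 := proj_col (ln_12 (ln_23 H23)) H20 (ncolC H22).
have [p24 H36] := line_of Hc2 Hd2.
have H37 : col p15 p24 := ln_col12 (ln_23 H36).
have H38 : p15 != p24 := ln_neq12 (ln_23 H36).
have H39 : col p36 p24 := ln_col12 (ln_23 (ln_12 H36)).
have H40 : p36 != p24 := ln_neq12 (ln_23 (ln_12 H36)).
have H41 : p24 != p12 := colncol_neq (colC H37) (ncolC Hn0).
have H42 : p24 != p56 := colncol_neq (colC H37) H11.
have H43 : p24 != p45 := colncol_neq (colC H37) H22.
have H44 : p24 != p34 := colncol_neq (colC H39) (ncolC Hn1).
have H45 : p24 != p26 := colncol_neq (colC H39) H34.
have H46 : ~~ col p24 p12 := tri_ncol H12 (colC H39) (neqC H40) H41 H43.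
have H47 : ~~ col p24 p45 := tri_ncol (ln_23 H12) (colC H39) (neqC H40) H43 H41.
have H48 : ~~ col p24 p34 := tri_ncol (ln_12 H23) (colC H37) (neqC H38) H44 H45.
have H49 : ~~ col p24 p26 := tri_ncol (ln_23 (ln_12 H23)) (colC H37) (neqC H38) H45 H44.
have H50 : col p56 p24 := proj_col (ln_12 (ln_23 H36)) (ncolC H11) (ncolC H10).
have [p13 H51] := line_of H50 (neqC H42).
have H52 : col p56 p13 := ln_col12 (ln_23 H51).
have H53 : p56 != p13 := ln_neq12 (ln_23 H51).
have H54 : col p24 p13 := ln_col12 (ln_23 (ln_12 H51)).
have H55 : p24 != p13 := ln_neq12 (ln_23 (ln_12 H51)).
have H56 : p13 != p15 := colncol_neq (colC H52) (ncolC H11).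
have H57 : p13 != p36 := colncol_neq (colC H52) (ncolC H10).
have H58 : p13 != p45 := colncol_neq (colC H52) (ncolC H21).
have H59 : p13 != p26 := colncol_neq (colC H52) (ncolC H33).
have H60 : p13 != p12 := colncol_neq (colC H54) H46.
have H61 : p13 != p34 := colncol_neq (colC H54) H48.
have H62 : ~~ col p13 p12 := tri_ncol (ln_12 (ln_23 H3)) (colC H52) (neqC H53) H60 H61.
have H63 : ~~ col p13 p34 := tri_ncol (ln_12 (ln_23 (ln_12 H3))) (colC H52) (neqC H53) H61 H60.
have H64 : ~~ col p13 p15 := tri_ncol (ln_12 (ln_23 H36)) (colC H54) (neqC H55) H56 H57.
have H65 : ~~ col p13 p36 := tri_ncol (ln_12 (ln_23 (ln_12 H36))) (colC H54) (neqC H55) H57 H56.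
have H66 : col p45 p13 := proj_col (ln_12 (ln_23 H51)) H21 (ncolC H47).
have H67 : col p26 p13 := proj_col (ln_12 (ln_23 H51)) H33 (ncolC H49).
have H68 : ln p45 p26 p13 := mk_ln H35 (neqC H29) (colC H66) (colC H67) H58 H59.
have [p35 [p46 [HX1 HX2 HX3]]] : exists p35 p46, [/\ ln p12 p35 p46, col p13 p46 & (p35 \notin [set p34; p56; p36; p45]) && (p46 \notin [set p34; p56; p36; p45])].
  have [c1 [c2 [Hl Hn]]] := new_line3 H3 (ln_12 H12).
  case/or3P: (proj3 p13 Hl) => Hc.
  - by move: H62; rewrite Hc.
  - by exists c2, c1; split => //; [exact: ln_23 Hl | rewrite andbC].
  - by exists c1, c2.
case/andP: HX3 => /notin4[HY1 HY2 HY3 HY4] /notin4[HY5 HY6 HY7 HY8].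
have H69 : col p12 p35 := ln_col12 HX1.
have H70 : p12 != p35 := ln_neq12 HX1.
have H71 : col p12 p46 := ln_col12 (ln_23 HX1).
have H72 : p12 != p46 := ln_neq12 (ln_23 HX1).
have H73 : col p35 p46 := ln_col12 (ln_23 (ln_12 HX1)).
have H74 : p35 != p46 := ln_neq12 (ln_23 (ln_12 HX1)).
have H75 : p35 != p15 := colncol_neq (colC H69) Hn0.
have H76 : p35 != p26 := colncol_neq (colC H69) (ncolC H32).
have H77 : p35 != p24 := colncol_neq (colC H69) (ncolC H46).
have H78 : p35 != p13 := colncol_neq (colC H69) (ncolC H62).
have H79 : p46 != p15 := colncol_neq (colC H71) Hn0.
have H80 : p46 != p26 := colncol_neq (colC H71) (ncolC H32).
have H81 : p46 != p24 := colncol_neq (colC H71) (ncolC H46).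
have H82 : p46 != p13 := colncol_neq (colC H71) (ncolC H62).
have H83 : ~~ col p35 p34 := tri_ncol H3 (colC H69) (neqC H70) HY1 HY2.
have H84 : ~~ col p35 p56 := tri_ncol (ln_23 H3) (colC H69) (neqC H70) HY2 HY1.
have H85 : ~~ col p46 p34 := tri_ncol H3 (colC H71) (neqC H72) HY5 HY6.
have H86 : ~~ col p46 p56 := tri_ncol (ln_23 H3) (colC H71) (neqC H72) HY6 HY5.
have H87 : ~~ col p35 p36 := tri_ncol (ln_12 H12) (colC H69) (neqC H70) HY3 HY4.
have H88 : ~~ col p35 p45 := tri_ncol (ln_23 (ln_12 H12)) (colC H69) (neqC H70) HY4 HY3.
have H89 : ~~ col p46 p36 := tri_ncol (ln_12 H12) (colC H71) (neqC H72) HY7 HY8.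
have H90 : ~~ col p46 p45 := tri_ncol (ln_23 (ln_12 H12)) (colC H71) (neqC H72) HY8 HY7.
have H91 : ~~ col p46 p24 := tri_ncol (ln_12 (ln_23 (ln_12 H51))) (colC HX2) H82 H81 HY6.
have H92 : ~~ col p46 p26 := tri_ncol (ln_12 (ln_23 (ln_12 H68))) (colC HX2) H82 H80 HY8.
have H93 : col p26 p35 := proj_col (ln_12 HX1) H32 (ncolC H92).
have H94 : col p24 p35 := proj_col (ln_12 HX1) H46 (ncolC H91).
have H95 : ~~ col p13 p35 := tri_ncol (ln_12 (ln_23 (ln_12 HX1))) HX2 (neqC H82) (neqC H78) H60.
have H96 : col p46 p15 := proj_col (ln_12 H23) H85 H92.
have H97 : ~~ col p35 p15 := tri_ncol (ln_12 (ln_23 (ln_12 H23))) (colC H93) H76 H75 HY1.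
have [p25 H98] := line_of HX2 (neqC H82).
have H99 : col p13 p25 := ln_col12 (ln_23 H98).
have H100 : p13 != p25 := ln_neq12 (ln_23 H98).
have H101 : col p46 p25 := ln_col12 (ln_23 (ln_12 H98)).
have H102 : p46 != p25 := ln_neq12 (ln_23 (ln_12 H98)).
have H103 : p25 != p12 := colncol_neq (colC H99) H62.
have H104 : p25 != p34 := colncol_neq (colC H99) H63.
have H105 : p25 != p15 := colncol_neq (colC H99) H64.
have H106 : p25 != p36 := colncol_neq (colC H99) H65.
have H107 : p25 != p35 := colncol_neq (colC H99) H95.
have H108 : p25 != p56 := colncol_neq (colC H101) H86.
have H109 : p25 != p45 := colncol_neq (colC H101) H90.
have H110 : p25 != p26 := colncol_neq (colC H101) H92.
have H111 : p25 != p24 := colncol_neq (colC H101) H91.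
have H112 : ~~ col p25 p56 := tri_ncol (ln_12 (ln_23 H51)) (colC H99) (neqC H100) H108 H111.
have H113 : ~~ col p25 p24 := tri_ncol (ln_12 (ln_23 (ln_12 H51))) (colC H99) (neqC H100) H111 H108.
have H114 : ~~ col p25 p45 := tri_ncol (ln_12 (ln_23 H68)) (colC H99) (neqC H100) H109 H110.
have H115 : ~~ col p25 p26 := tri_ncol (ln_12 (ln_23 (ln_12 H68))) (colC H99) (neqC H100) H110 H109.
have H116 : ~~ col p25 p12 := tri_ncol (ln_12 (ln_23 HX1)) (colC H101) (neqC H102) H103 H107.
have H117 : ~~ col p25 p35 := tri_ncol (ln_12 (ln_23 (ln_12 HX1))) (colC H101) (neqC H102) H107 H103.
have H118 : ~~ col p15 p25 := tri_ncol (ln_23 (ln_12 H98)) (colC H96) (neqC H79) (neqC H105) (neqC H56).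
have H119 : col p34 p25 := proj_col (ln_12 (ln_23 H98)) (ncolC H63) (ncolC H85).
have H120 : col p36 p25 := proj_col (ln_12 (ln_23 H98)) (ncolC H65) (ncolC H89).
have [p23 H121] := line_of H96 H79.
have H122 : col p46 p23 := ln_col12 (ln_23 H121).
have H123 : p46 != p23 := ln_neq12 (ln_23 H121).
have H124 : col p15 p23 := ln_col12 (ln_23 (ln_12 H121)).
have H125 : p15 != p23 := ln_neq12 (ln_23 (ln_12 H121)).
have H126 : p23 != p12 := colncol_neq (colC H124) (ncolC Hn0).
have H127 : p23 != p56 := colncol_neq (colC H124) H11.
have H128 : p23 != p45 := colncol_neq (colC H124) H22.
have H129 : p23 != p13 := colncol_neq (colC H124) (ncolC H64).
have H130 : p23 != p35 := colncol_neq (colC H124) (ncolC H97).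
have H131 : p23 != p25 := colncol_neq (colC H124) H118.
have H132 : p23 != p34 := colncol_neq (colC H122) H85.
have H133 : p23 != p36 := colncol_neq (colC H122) H89.
have H134 : p23 != p26 := colncol_neq (colC H122) H92.
have H135 : p23 != p24 := colncol_neq (colC H122) H91.
have H136 : ~~ col p23 p34 := tri_ncol (ln_12 H23) (colC H124) (neqC H125) H132 H134.
have H137 : ~~ col p23 p26 := tri_ncol (ln_23 (ln_12 H23)) (colC H124) (neqC H125) H134 H132.
have H138 : ~~ col p23 p36 := tri_ncol H36 (colC H124) (neqC H125) H133 H135.
have H139 : ~~ col p23 p24 := tri_ncol (ln_23 H36) (colC H124) (neqC H125) H135 H133.
have H140 : ~~ col p23 p12 := tri_ncol (ln_12 (ln_23 HX1)) (colC H122) (neqC H123) H126 H130.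
have H141 : ~~ col p23 p35 := tri_ncol (ln_12 (ln_23 (ln_12 HX1))) (colC H122) (neqC H123) H130 H126.
have H142 : ~~ col p23 p13 := tri_ncol (ln_12 H98) (colC H122) (neqC H123) H129 H131.
have H143 : ~~ col p23 p25 := tri_ncol (ln_23 (ln_12 H98)) (colC H122) (neqC H123) H131 H129.
have H144 : col p56 p23 := proj_col (ln_12 (ln_23 H121)) (ncolC H86) (ncolC H11).
have H145 : col p45 p23 := proj_col (ln_12 (ln_23 H121)) (ncolC H90) (ncolC H22).
have [p16 H146] := line_of H145 (neqC H128).
have H147 : col p45 p16 := ln_col12 (ln_23 H146).
have H148 : p45 != p16 := ln_neq12 (ln_23 H146).
have H149 : col p23 p16 := ln_col12 (ln_23 (ln_12 H146)).
have H150 : p23 != p16 := ln_neq12 (ln_23 (ln_12 H146)).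
have H151 : p16 != p34 := colncol_neq (colC H147) H20.
have H152 : p16 != p15 := colncol_neq (colC H147) (ncolC H22).
have H153 : p16 != p56 := colncol_neq (colC H147) H21.
have H154 : p16 != p24 := colncol_neq (colC H147) (ncolC H47).
have H155 : p16 != p35 := colncol_neq (colC H147) (ncolC H88).
have H156 : p16 != p46 := colncol_neq (colC H147) (ncolC H90).
have H157 : p16 != p25 := colncol_neq (colC H147) (ncolC H114).
have H158 : p16 != p12 := colncol_neq (colC H149) H140.
have H159 : p16 != p36 := colncol_neq (colC H149) H138.
have H160 : p16 != p26 := colncol_neq (colC H149) H137.
have H161 : p16 != p13 := colncol_neq (colC H149) H142.
have H162 : ~~ col p16 p36 := tri_ncol (ln_12 (ln_23 H12)) (colC H147) (neqC H148) H159 H158.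
have H163 : ~~ col p16 p12 := tri_ncol (ln_12 (ln_23 (ln_12 H12))) (colC H147) (neqC H148) H158 H159.
have H164 : ~~ col p16 p26 := tri_ncol H68 (colC H147) (neqC H148) H160 H161.
have H165 : ~~ col p16 p13 := tri_ncol (ln_23 H68) (colC H147) (neqC H148) H161 H160.
have H166 : ~~ col p16 p46 := tri_ncol (ln_12 (ln_23 H121)) (colC H149) (neqC H150) H156 H152.
have H167 : ~~ col p16 p15 := tri_ncol (ln_12 (ln_23 (ln_12 H121))) (colC H149) (neqC H150) H152 H156.
have H168 : ~~ col p56 p16 := tri_ncol (ln_23 (ln_12 H146)) H144 (neqC H127) (neqC H153) (neqC H19).
have H169 : col p34 p16 := proj_col (ln_12 (ln_23 H146)) (ncolC H20) (ncolC H136).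
have H170 : col p24 p16 := proj_col (ln_12 (ln_23 H146)) H47 (ncolC H139).
have H171 : col p35 p16 := proj_col (ln_12 (ln_23 H146)) H88 (ncolC H141).
have H172 : col p25 p16 := proj_col (ln_12 (ln_23 H146)) H114 (ncolC H143).
have H173 : ln p24 p35 p16 := mk_ln H94 (neqC H77) (colC H170) (colC H171) H154 H155.
have H174 : ln p34 p25 p16 := mk_ln H119 (neqC H104) (colC H169) (colC H172) H151 H157.
have [p14 H175] := line_of H144 (neqC H127).
have H176 : col p56 p14 := ln_col12 (ln_23 H175).
have H177 : p56 != p14 := ln_neq12 (ln_23 H175).
have H178 : col p23 p14 := ln_col12 (ln_23 (ln_12 H175)).
have H179 : p23 != p14 := ln_neq12 (ln_23 (ln_12 H175)).
have H180 : p14 != p15 := colncol_neq (colC H176) (ncolC H11).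
have H181 : p14 != p36 := colncol_neq (colC H176) (ncolC H10).
have H182 : p14 != p45 := colncol_neq (colC H176) (ncolC H21).
have H183 : p14 != p26 := colncol_neq (colC H176) (ncolC H33).
have H184 : p14 != p35 := colncol_neq (colC H176) (ncolC H84).
have H185 : p14 != p46 := colncol_neq (colC H176) (ncolC H86).
have H186 : p14 != p25 := colncol_neq (colC H176) (ncolC H112).
have H187 : p14 != p16 := colncol_neq (colC H176) H168.
have H188 : p14 != p12 := colncol_neq (colC H178) H140.
have H189 : p14 != p34 := colncol_neq (colC H178) H136.
have H190 : p14 != p24 := colncol_neq (colC H178) H139.
have H191 : p14 != p13 := colncol_neq (colC H178) H142.
have H192 : ~~ col p14 p12 := tri_ncol (ln_12 (ln_23 H3)) (colC H176) (neqC H177) H188 H189.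
have H193 : ~~ col p14 p34 := tri_ncol (ln_12 (ln_23 (ln_12 H3))) (colC H176) (neqC H177) H189 H188.
have H194 : ~~ col p14 p24 := tri_ncol H51 (colC H176) (neqC H177) H190 H191.
have H195 : ~~ col p14 p13 := tri_ncol (ln_23 H51) (colC H176) (neqC H177) H191 H190.
have H196 : ~~ col p14 p46 := tri_ncol (ln_12 (ln_23 H121)) (colC H178) (neqC H179) H185 H180.
have H197 : ~~ col p14 p15 := tri_ncol (ln_12 (ln_23 (ln_12 H121))) (colC H178) (neqC H179) H180 H185.
have H198 : ~~ col p14 p45 := tri_ncol (ln_12 H146) (colC H178) (neqC H179) H182 H187.
have H199 : ~~ col p14 p16 := tri_ncol (ln_23 (ln_12 H146)) (colC H178) (neqC H179) H187 H182.
have H200 : col p14 p35 := proj_col (ln_12 H173) H194 H199.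
have H201 : col p14 p25 := proj_col (ln_12 H174) H193 H199.
have H202 : col p36 p14 := proj_col (ln_12 (ln_23 H175)) H10 (ncolC H138).
have H203 : col p26 p14 := proj_col (ln_12 (ln_23 H175)) H33 (ncolC H137).
have H204 : ln p26 p35 p14 := mk_ln H93 (neqC H76) (colC H203) H200 H183 H184.
have H205 : ln p36 p25 p14 := mk_ln H120 (neqC H106) (colC H202) H201 H181 H186.
exists [:: p12; p13; p14; p15; p16; p23; p24; p25; p26; p34; p35; p36; p45; p46; p56]; split.
- by [].
- by rewrite /= !inE !negb_or (neqC H60) (neqC H188) H1 (neqC H158) (neqC H126) (neqC H41) (neqC H103) (neqC H30) Hd0 H70 (neqC Hd3) H16 H72 H5 (neqC H191) H56 (neqC H161) (neqC H129) (neqC H55) H100 H59 H61 (neqC H78) H57 H58 (neqC H82) (neqC H53) H180 H187 (neqC H179) H190 H186 H183 H189 H184 H181 H182 H185 (neqC H177) (neqC H152) H125 H38 (neqC H105) H27 (neqC Hd1) (neqC H75) Hd2 (neqC H17) (neqC H79) (neqC H8) (neqC H150) H154 H157 H160 H151 H155 H159 (neqC H148) H156 H153 H135 H131 H134 H132 H130 H133 H128 (neqC H123) H127 (neqC H111) H45 H44 (neqC H77) (neqC H40) H43 (neqC H81) H42 H110 H104 H107 H106 H109 (neqC H102) H108 (neqC H25) (neqC H76) H28 H29 (neqC H80) H31 (neqC HY1) H2 (neqC H18) (neqC HY5) H7 HY3 HY4 H74 HY2 H14 (neqC HY7) (neqC H9) (neqC HY8) H19 HY6.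
- move=> y; case/or3P: (proj3 y H3) => Hy.
  + apply: (mem_sub (complete H3 HX1 (ln_12 H12) (notin2 (neqC HY1) (neqC HY5)) (notin2 H2 (neqC H18)) (notin2 HY3 HY4) (colC Hy))).
    by rewrite /= !inE !eqxx ?orbT.
  + apply: (mem_sub (complete (ln_12 H3) H23 (ln_23 H174) (notin2 H1 (neqC H30)) (notin2 (neqC H158) (neqC H103)) (notin2 (neqC H152) (neqC H105)) (colC Hy))).
    by rewrite /= !inE !eqxx ?orbT.
  + apply: (mem_sub (complete (ln_12 (ln_23 H3)) (ln_23 H51) (ln_23 H175) (notin2 (neqC H60) (neqC H41)) (notin2 (neqC H188) (neqC H126)) (notin2 (neqC H191) (neqC H129)) (colC Hy))).
    by rewrite /= !inE !eqxx ?orbT.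
- by rewrite /= H3 HX1 (ln_12 H12) (ln_12 (ln_23 (ln_12 H51))) (ln_23 H98) (ln_12 (ln_23 (ln_12 H68))) (ln_12 (ln_23 (ln_12 H175))) (ln_12 (ln_23 (ln_12 H205))) (ln_12 (ln_23 H204)) (ln_23 (ln_12 H121)) (ln_23 H36) (ln_23 (ln_12 H23)) (ln_12 (ln_23 (ln_12 H146))) (ln_12 (ln_23 H173)) (ln_12 (ln_23 (ln_12 H174))).
Qed.

End GQ.
Arguments ln : simpl never.



Definition mk3 (t : nat * (nat * nat)) : {set 'I_15} := [set inord t.1; inord t.2.1; inord t.2.2].
Definition WLs : seq {set 'I_15} := map mk3 WLidx.
Definition WL : {set {set 'I_15}} := [set l in WLs].
Definition pts := iota 0 15.
Definition memT (n : nat) (t : nat * (nat * nat)) := ((n == t.1) || (n == t.2.1)) || (n == t.2.2).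

Lemma WLidx_ok : all (fun t => [&& t.1 < 15, t.2.1 < 15 & t.2.2 < 15]) WLidx.
Proof. vm_compute. reflexivity. Qed.
Lemma inordE (i : 'I_15) n : n < 15 -> (i == inord n) = (val i == n).
Proof. by move=> H; rewrite -val_eqE /= inordK. Qed.
Lemma mem_mk3 (i : 'I_15) t : t \in WLidx -> (i \in mk3 t) = memT i t.
Proof.
move=> tW; have /allP/(_ t tW)/and3P[h1 h2 h3] := WLidx_ok.
by rewrite /mk3 !inE !inordE.
Qed.
Lemma WLidx_uniq : uniq WLidx.
Proof. vm_compute. reflexivity. Qed.
Lemma WLidx_sep : all (fun t1 => all (fun t2 =>
  all (fun n => memT n t1 == memT n t2) pts ==> (t1 == t2)) WLidx) WLidx.
Proof. vm_compute. reflexivity. Qed.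
Lemma WLs_uniq : uniq WLs.
Proof.
rewrite /WLs map_inj_in_uniq ?WLidx_uniq // => t1 t2 h1 h2 E.
have /allP/(_ t1 h1)/allP/(_ t2 h2)/implyP H := WLidx_sep.
apply/eqP; apply: H; apply/allP => n; rewrite mem_iota /= add0n => nlt.
by rewrite -(mem_mk3 (Ordinal nlt) h1) -(mem_mk3 (Ordinal nlt) h2) E.
Qed.
Lemma card_WL : #|WL| = 15.
Proof. by rewrite cardsE (card_uniqP WLs_uniq) size_map. Qed.

Lemma dcount (P : finType) (L : {set {set P}}) : is_GQ22 L -> #|P| = 15 -> #|L| = 15.
Proof.
move=> H HP.
have E : \sum_(x : P) #|[set l in L | x \in l]| = \sum_(l in L) #|l|.
  transitivity (\sum_(x : P) \sum_(l in L) ((x \in l) : nat)).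
    apply: eq_bigr => x _; rewrite -sum1_card big_mkcond [RHS]big_mkcond /=.
    by apply: eq_bigr => l _; rewrite !inE; case: (l \in L); case: (x \in l).
  rewrite exchange_big /=; apply: eq_bigr => l _.
  by rewrite -sum1_card [RHS]big_mkcond; apply: eq_bigr => x _; case: (x \in l).
rewrite (eq_bigr (fun _ => 3)) in E; last by move=> x _; apply: (lines_at H).
rewrite [in RHS](eq_bigr (fun _ => 3)) in E; last by move=> l Hl; apply: (line3 H).
have E3 : #|[pred x : P | true]| = 15 by rewrite -HP; apply: eq_card.
move: E; rewrite !sum_nat_const E3.
by move/eqP; rewrite eqn_mul2r /= eq_sym => /eqP.
Qed.

Lemma GQ_iso (P : finType) (L : {set {set P}}) : is_GQ22 L ->
  exists g : 'I_15 -> P, bijective g /\ L = [set g @: l | l : {set 'I_15} in WL].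
Proof.
move=> H; have HP : 0 < #|P| by case: H.
have [a [b [c [d [[c1 c2 c3 c4] [[n1 n2 n3 n4] [m1 m2]]]]]]] := quadrangle H HP.
have [s [Hs Hu Hall Hln]] := derive H c1 c2 c3 c4 n1 n2 n3 n4 m1 m2.
pose g (i : 'I_15) := nth a s i.
pose h y : 'I_15 := inord (index y s).
have gK : cancel g h.
  move=> i; apply: val_inj => /=; rewrite /h /g inordK; first by rewrite index_uniq ?Hs.
  by rewrite index_uniq ?Hs.
have hK : cancel h g.
  by move=> y; rewrite /g /h inordK ?nth_index ?Hall // -Hs index_mem Hall.
have gb : bijective g by exists h.
have ginj : injective g := bij_inj gb.
exists g; split => //.
have sub : [set g @: l | l : {set 'I_15} in WL] \subset L.
  apply/subsetP => _ /imsetP[l lW ->]; move: lW; rewrite inE => /mapP[t tW ->].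
  have /allP/(_ t tW)/and3P[t1 t2 t3] := WLidx_ok.
  have := allP Hln t tW; rewrite /mk3 /ln imsetU imsetU1 !imset_set1 /g !inordK //.
have cP : #|P| = 15 by rewrite -(bij_eq_card gb) card_ord.
apply/eqP; rewrite eq_sym eqEcard sub /= (dcount H cP) card_imset ?card_WL //.
exact: imset_inj.
Qed.

Section Char.
Variables (P P' : finType) (L : {set {set P}}) (L' : {set {set P'}}) (f : P -> P').
Local Notation V := (calP L' f).

Definition condL (a b c : V) : bool :=
  let x := (val a).1 in let y := (val b).1 in let z := (val c).1 in
  let u := (val a).2 in let v := (val b).2 in let w := (val c).2 in
  let T := [set x; y; z] in
  [&& x != y, y != z, x != z, (T \in L) || complete_triad L T,
      u != v, v != w, u != w & [set u; v; w] == perpS L' (f @: T)].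

Lemma cond_12 a b c : condL a b c = condL b a c.
Proof.
rewrite /condL /= set3C12 [[set (val a).2; _; _]]set3C12.
rewrite (eq_sym (val a).1) (eq_sym (val a).2).
by case: ((val b).1 != _); case: ((val a).1 != _); case: ((val b).1 != _);
   case: ((val b).2 != _); case: ((val a).2 != _); case: ((val b).2 != _).
Qed.
Lemma cond_23 a b c : condL a b c = condL a c b.
Proof.
rewrite /condL /= set3C23 [[set (val a).2; _; _]]set3C23.
rewrite (eq_sym (val b).1) (eq_sym (val b).2).
by case: ((val a).1 != (val b).1); case: ((val a).1 != (val c).1); case: ((val c).1 != _);
   case: ((val a).2 != (val b).2); case: ((val a).2 != (val c).2); case: ((val c).2 != _).
Qed.

Lemma adjE a b : calAdj L L' f a b = (a != b) && [exists c, condL a b c].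
Proof.
rewrite /calAdj; case: (eqVneq a b) => //= ab.
apply/existsP/existsP => [[Lc /and3P[HL aL bL]]|[c Hc]].
  case/existsP: HL => a' /existsP[b' /existsP[c' /andP[/eqP E H]]].
  move: aL bL; rewrite E !inE => /orP[/orP[]|] /eqP Ea /orP[/orP[]|] /eqP Eb;
    subst; rewrite ?eqxx // in ab.
  - by exists c'.
  - by exists b'; rewrite -cond_23.
  - by exists c'; rewrite -cond_12.
  - by exists a'; rewrite -cond_23 -cond_12.
  - by exists b'; rewrite -cond_12 -cond_23.
  - by exists a'; rewrite -cond_23 -cond_12 -cond_23.
exists [set a; b; c]; rewrite !inE !eqxx ?orbT andbT.
by apply/existsP; exists a; apply/existsP; exists b; apply/existsP; exists c; rewrite eqxx.
Qed.
End Char.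

Lemma imset3 (T U : finType) (h : T -> U) x y z : h @: [set x; y; z] = [set h x; h y; h z].
Proof. by rewrite imsetU imsetU1 !imset_set1. Qed.

Section Iso.
Variables (T U : finType) (phi : T -> U) (psi : U -> T).
Hypotheses (phiK : cancel phi psi) (psiK : cancel psi phi).
Variables (L1 : {set {set T}}) (L2 : {set {set U}}).
Hypothesis HL : L2 = [set phi @: l | l : {set T} in L1].
Let phi_inj : injective phi := can_inj phiK.

Lemma lnI (A : {set T}) : (phi @: A \in L2) = (A \in L1).
Proof. by rewrite HL (mem_imset _ _ (imset_inj phi_inj)). Qed.

Lemma colI x y : collinear L2 (phi x) (phi y) = collinear L1 x y.
Proof.
apply/colP/colP => [[l lL /andP[xl yl]]|[l lL /andP[xl yl]]].
  move: lL; rewrite HL => /imsetP[m mL E]; subst l.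
  by exists m; rewrite // -!(mem_imset _ _ phi_inj) xl yl.
exists (phi @: l); first by rewrite lnI.
by rewrite !(mem_imset _ _ phi_inj) xl yl.
Qed.

Lemma perpI x : perp L2 (phi x) = phi @: perp L1 x.
Proof.
apply/setP => y'; rewrite -(psiK y') (mem_imset _ _ phi_inj) !inE (inj_eq phi_inj).
by rewrite colI.
Qed.

Lemma perpSI (A : {set T}) : perpS L2 (phi @: A) = phi @: perpS L1 A.
Proof.
apply/setP => y'; rewrite -(psiK y') (mem_imset _ _ phi_inj).
apply/bigcapP/bigcapP => [H a aA|H _ /imsetP[a aA ->]].
  by have := H (phi a) (imset_f phi aA); rewrite perpI (mem_imset _ _ phi_inj).
by rewrite perpI (mem_imset _ _ phi_inj); apply: H.
Qed.

Lemma ctI (A : {set T}) : complete_triad L2 (phi @: A) = complete_triad L1 A.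
Proof.
rewrite /complete_triad /triad perpSI !(card_imset _ phi_inj).
congr (_ && _ && _).
apply/forall_inP/forall_inP => H x xA.
  apply/forall_inP => y yA.
  have := H (phi x) (imset_f phi xA) => /forall_inP/(_ (phi y) (imset_f phi yA)).
  by rewrite (inj_eq phi_inj) colI.
case/imsetP: xA => x' xA ->; apply/forall_inP => _ /imsetP[y' yA ->].
by rewrite (inj_eq phi_inj) colI; have /forall_inP := H x' xA; apply.
Qed.
End Iso.

Definition colH (i j : nat) := has (fun t => memT i t && memT j t) WLidx.
Definition colRow (i : nat) : seq bool :=
  match i with
  | 0 => [:: true; false; false; false; false; false; false; false; false; true; true; true; true; true; true]
  | 1 => [:: false; true; false; false; false; false; true; true; true; false; false; false; true; true; true]
  | 2 => [:: false; false; true; false; false; true; false; true; true; false; true; true; false; false; true]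
  | 3 => [:: false; false; false; true; false; true; true; false; true; true; false; true; false; true; false]
  | 4 => [:: false; false; false; false; true; true; true; true; false; true; true; false; true; false; false]
  | 5 => [:: false; false; true; true; true; true; false; false; false; false; false; false; true; true; true]
  | 6 => [:: false; true; false; true; true; false; true; false; false; false; true; true; false; false; true]
  | 7 => [:: false; true; true; false; true; false; false; true; false; true; false; true; false; true; false]
  | 8 => [:: false; true; true; true; false; false; false; false; true; true; true; false; true; false; false]
  | 9 => [:: true; false; false; true; true; false; false; true; true; true; false; false; false; false; true]
  | 10 => [:: true; false; true; false; true; false; true; false; true; false; true; false; false; true; false]
  | 11 => [:: true; false; true; true; false; false; true; true; false; false; false; true; true; false; false]
  | 12 => [:: true; true; false; false; true; true; false; false; true; false; false; true; true; false; false]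
  | 13 => [:: true; true; false; true; false; true; false; true; false; false; true; false; false; true; false]
  | _ => [:: true; true; true; false; false; true; true; false; false; true; false; false; false; false; true]
  end.
Definition colN (i j : nat) : bool := nth false (colRow i) j.

Definition perpN (i k : nat) := (k == i) || colN i k.
Definition mem3 (k x y z : nat) := ((k == x) || (k == y)) || (k == z).
Definition lnN x y z := has (fun t => all (fun k => memT k t == mem3 k x y z) pts) WLidx.
Definition triadN x y z := (count (fun k => mem3 k x y z) pts == 3) &&
  all (fun p => mem3 p x y z ==> all (fun q => mem3 q x y z ==> ((p != q) ==> ~~ colN p q)) pts) pts.
Definition perp3N x y z k := all (fun a => mem3 a x y z ==> perpN a k) pts.
Definition ctN x y z := triadN x y z && (count (perp3N x y z) pts == 3).
Definition condN (a b c : nat * nat) :=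
  let x := a.1 in let y := b.1 in let z := c.1 in let u := a.2 in let v := b.2 in let w := c.2 in
  [&& x != y, y != z, x != z, lnN x y z || ctN x y z, u != v, v != w, u != w &
      all (fun k => mem3 k u v w == perp3N x y z k) pts].

Arguments pts : simpl never.
Lemma in_pts n : (n \in pts) = (n < 15).
Proof. by rewrite mem_iota. Qed.
Lemma forall_pts (Q : nat -> bool) : [forall k : 'I_15, Q k] = all Q pts.
Proof.
apply/forallP/allP => [H n|H k]; last by apply: H; rewrite in_pts.
by rewrite in_pts => nlt; apply: (H (Ordinal nlt)).
Qed.
Lemma card_pts (A : {pred 'I_15}) (Q : nat -> bool) :
  (forall k : 'I_15, (k \in A) = Q k) -> #|A| = count Q pts.
Proof.
move=> HA; rewrite -size_filter cardE -(size_map val).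
apply: perm_size; apply: uniq_perm.
- by rewrite map_inj_uniq ?enum_uniq //; apply: val_inj.
- by rewrite filter_uniq // iota_uniq.
move=> n; rewrite mem_filter in_pts; apply/mapP/idP => [[k kA ->]|/andP[Qn nlt]].
  by rewrite -HA -mem_enum kA ltn_ord.
by exists (Ordinal nlt); rewrite // mem_enum HA.
Qed.
Lemma seteqE (A B : {set 'I_15}) : (A == B) = [forall k, (k \in A) == (k \in B)].
Proof.
apply/eqP/forallP => [->|H]; first by move=> k; rewrite eqxx.
by apply/setP => k; apply/eqP/H.
Qed.

Lemma colWE i j : collinear WL i j = has (fun l : {set 'I_15} => (i \in l) && (j \in l)) WLs.
Proof.
apply/colP/hasP => [[l lW H]|[l lW H]]; exists l => //.
  by move: lW; rewrite inE.
by rewrite inE.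
Qed.
Lemma colWH (i j : 'I_15) : collinear WL i j = colH i j.
Proof. by rewrite colWE /WLs has_map; apply: eq_in_has => t tW /=; rewrite !mem_mk3. Qed.
Lemma colHN_ok : all (fun i => all (fun j => colH i j == colN i j) pts) pts.
Proof. vm_compute. reflexivity. Qed.
Lemma colWN (i j : 'I_15) : collinear WL i j = colN i j.
Proof.
rewrite colWH; have /allP/(_ i) := colHN_ok; rewrite in_pts ltn_ord => /(_ isT)/allP/(_ j).
by rewrite in_pts ltn_ord => /(_ isT)/eqP.
Qed.
Lemma perpWN (i j : 'I_15) : (j \in perp WL i) = perpN i j.
Proof. by rewrite inE colWN -val_eqE. Qed.
Lemma mem3E (k x y z : 'I_15) : (k \in [set x; y; z]) = mem3 k x y z.
Proof. by rewrite !inE -!val_eqE. Qed.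
Lemma perpS3N (x y z k : 'I_15) : (k \in perpS WL [set x; y; z]) = perp3N x y z k.
Proof.
rewrite /perpS /perp3N; apply/bigcapP/allP => [H n|H a aT].
  rewrite in_pts => nlt; apply/implyP => m.
  by rewrite -[n]/(val (Ordinal nlt)) -perpWN; apply: H; rewrite mem3E.
have := H a; rewrite in_pts ltn_ord => /(_ isT)/implyP; rewrite -mem3E => /(_ aT).
by rewrite perpWN.
Qed.
Lemma lnWN (x y z : 'I_15) : ([set x; y; z] \in WL) = lnN x y z.
Proof.
rewrite inE /WLs -has_pred1 has_map /lnN; apply: eq_in_has => t tW.
change ((mk3 t == [set x; y; z]) = all (fun k => memT k t == mem3 k x y z) pts).
rewrite seteqE -forall_pts; apply: eq_forallb => k.
by rewrite mem_mk3 // mem3E.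
Qed.
Lemma ctWN (x y z : 'I_15) : complete_triad WL [set x; y; z] = ctN x y z.
Proof.
rewrite /complete_triad /triad /ctN /triadN (card_pts (Q := fun k => mem3 k x y z)); last first.
  by move=> k; rewrite mem3E.
rewrite (card_pts (Q := perp3N x y z)); last by move=> k; rewrite perpS3N.
congr (_ && _ && _); rewrite -forall_pts; apply: eq_forallb => p.
rewrite mem3E -forall_pts; congr (_ ==> _); apply: eq_forallb => q.
by rewrite mem3E colWN -val_eqE.
Qed.

Definition V := {p : 'I_15 * 'I_15 | perpN p.1 p.2}.
Definition vn (a : V) : nat * nat := (nat_of_ord (val a).1, nat_of_ord (val a).2).
Definition condW (a b c : V) : bool :=
  let x := (val a).1 in let y := (val b).1 in let z := (val c).1 in
  let u := (val a).2 in let v := (val b).2 in let w := (val c).2 in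
  let T := [set x; y; z] in
  [&& x != y, y != z, x != z, (T \in WL) || complete_triad WL T,
      u != v, v != w, u != w & [set u; v; w] == perpS WL T].
Definition adjF (a b : V) := (a != b) && [exists c, condW a b c].

Lemma condWN a b c : condW a b c = condN (vn a) (vn b) (vn c).
Proof.
case: a => [[x u] Ha]; case: b => [[y v] Hb]; case: c => [[z w] Hc].
rewrite /condW /condN /vn; cbv beta zeta iota delta [fst snd sval].
rewrite seteqE -!val_eqE lnWN ctWN -forall_pts.
congr [&& _, _, _, _, _, _, _ & _]; apply: eq_forallb => k.
by rewrite mem3E perpS3N.
Qed.


Section Transport.
Variables (P P' : finType) (L : {set {set P}}) (L' : {set {set P'}}).
Variables (g : 'I_15 -> P) (gi : P -> 'I_15) (f : P -> P') (fi : P' -> P).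
Hypotheses (gK : cancel g gi) (giK : cancel gi g) (fK : cancel f fi) (fiK : cancel fi f).
Hypotheses (HL : L = [set g @: l | l : {set 'I_15} in WL]) (HL' : L' = [set f @: l | l : {set P} in L]).

Lemma perp_equiv (i j : 'I_15) : (f (g j) \in perp L' (f (g i))) = perpN i j.
Proof.
by rewrite (perpI fK fiK HL') (mem_imset _ _ (can_inj fK)) (perpI gK giK HL)
  (mem_imset _ _ (can_inj gK)) perpWN.
Qed.
Lemma PhiP (p : V) : calP_pred L' f (g (val p).1, f (g (val p).2)).
Proof. by rewrite /calP_pred perp_equiv; exact: valP p. Qed.
Definition Phi (p : V) : calP L' f := exist (calP_pred L' f) (g (val p).1, f (g (val p).2)) (PhiP p).
Lemma PhiinvP (q : calP L' f) : perpN (gi (val q).1) (gi (fi (val q).2)).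
Proof. by rewrite -perp_equiv !giK fiK; exact: valP q. Qed.
Definition Phiinv (q : calP L' f) : V := exist (fun p : 'I_15 * 'I_15 => perpN p.1 p.2) (gi (val q).1, gi (fi (val q).2)) (PhiinvP q).
Lemma PhiK : cancel Phiinv Phi.
Proof. by move=> [[x y] H]; apply: val_inj => /=; rewrite !giK fiK. Qed.
Lemma PhiinvK : cancel Phi Phiinv.
Proof. by move=> [[i j] H]; apply: val_inj => /=; rewrite fK !gK. Qed.

Lemma condE a b c : @condL _ _ L L' f (Phi a) (Phi b) (Phi c) = condW a b c.
Proof.
rewrite /condL /condW /= !(inj_eq (can_inj fK)) !(inj_eq (can_inj gK)).
rewrite -(imset3 g) -(imset3 f) -(imset3 g).
rewrite (lnI gK HL) (ctI gK giK HL) (perpSI fK fiK HL') (perpSI gK giK HL).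
by rewrite (inj_eq (imset_inj (can_inj fK))) (inj_eq (imset_inj (can_inj gK))).
Qed.

Lemma adjPhi a b : calAdj L L' f (Phi a) (Phi b) = adjF a b.
Proof.
rewrite adjE (inj_eq (can_inj PhiinvK)); congr (_ && _).
apply/existsP/existsP => [[c H]|[c H]].
  by exists (Phiinv c); rewrite -condE PhiK.
by exists (Phi c); rewrite condE.
Qed.
End Transport.

Lemma path_map_rel (T U : Type) (e : rel T) (e' : rel U) (h : T -> U) :
  (forall x y, e x y -> e' (h x) (h y)) -> forall x s, path e x s -> path e' (h x) (map h s).
Proof.
move=> He; move=> x s; elim: s x => [|y s IH] x //= /andP[H1 H2].
by rewrite He // IH.
Qed.

Definition pairs := [seq (i, j) | i <- pts, j <- pts].
Definition VnF := [seq p <- pairs | perpN p.1 p.2].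
Definition Vn : seq (nat * nat) :=
  [:: (0, 0); (0, 9); (0, 10); (0, 11); (0, 12); (0, 13); (0, 14); (1, 1); (1, 6); (1, 7); (1, 8); (1, 12); (1, 13); (1, 14); (2, 2); (2, 5); (2, 7); (2, 8); (2, 10); (2, 11); (2, 14); (3, 3); (3, 5); (3, 6); (3, 8); (3, 9); (3, 11); (3, 13); (4, 4); (4, 5); (4, 6); (4, 7); (4, 9); (4, 10); (4, 12); (5, 2); (5, 3); (5, 4); (5, 5); (5, 12); (5, 13); (5, 14); (6, 1); (6, 3); (6, 4); (6, 6); (6, 10); (6, 11); (6, 14); (7, 1); (7, 2); (7, 4); (7, 7); (7, 9); (7, 11); (7, 13); (8, 1); (8, 2); (8, 3); (8, 8); (8, 9); (8, 10); (8, 12); (9, 0); (9, 3); (9, 4); (9, 7); (9, 8); (9, 9); (9, 14); (10, 0); (10, 2); (10, 4); (10, 6); (10, 8); (10, 10); (10, 13); (11, 0); (11, 2); (11, 3); (11, 6); (11, 7); (11, 11); (11, 12); (12, 0); (12, 1); (12, 4); (12, 5); (12, 8); (12, 11); (12, 12); (13, 0); (13, 1); (13, 3); (13, 5); (13, 7); (13, 10); (13, 13); (14, 0); (14, 1); (14, 2); (14, 5); (14, 6); (14, 9); (14, 14)].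
Lemma VnE : Vn = VnF.
Proof. vm_compute. reflexivity. Qed.
Definition adjN (a b : nat * nat) := (a != b) && has (condN a b) Vn.

Lemma vn_inj : injective vn.
Proof.
move=> [[i j] Hij] [[k l] Hkl]; rewrite /vn /= => [[E1 E2]].
by apply: val_inj => /=; congr pair; apply: val_inj.
Qed.
Lemma vn_in a : vn a \in Vn.
Proof.
rewrite VnE mem_filter /vn /= (valP a) /=; apply/allpairsP.
by exists (nat_of_ord (val a).1, nat_of_ord (val a).2); rewrite /= !in_pts !ltn_ord.
Qed.
Lemma Vn_dec n : n \in Vn -> exists a : V, vn a = n.
Proof.
case: n => i j; rewrite VnE mem_filter /= => /andP[Hp /allpairsP[[i' j'] [/= hi hj [E1 E2]]]].
subst i' j'; rewrite in_pts in hi; rewrite in_pts in hj.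
by exists (exist _ (Ordinal hi, Ordinal hj) Hp).
Qed.
Lemma adjFN a b : adjF a b = adjN (vn a) (vn b).
Proof.
rewrite /adjF /adjN (inj_eq vn_inj); congr (_ && _).
apply/existsP/hasP => [[c H]|[n nV H]].
  by exists (vn c); [exact: vn_in | rewrite -condWN].
by have [c E] := Vn_dec nV; exists c; rewrite condWN E.
Qed.

Lemma lift_path (A : V) s : path adjN (vn A) s -> all (mem Vn) s ->
  exists sV : seq V, map vn sV = s /\ path adjF A sV.
Proof.
elim: s A => [|n s IH] A /=; first by exists [::].
case/andP=> H1 H2 /andP[nV sV].
have [C E] := Vn_dec nV; subst n.
have [sV' [E' P']] := IH C H2 sV.
by exists (C :: sV'); rewrite /= E' adjFN H1.
Qed.
Definition tbl : seq (seq ((nat * nat) * (nat * nat))) := [::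
  [:: ((9, 9), (14, 14)); ((9, 14), (14, 9)); ((10, 10), (13, 13)); ((10, 13), (13, 10)); ((11, 11), (12, 12)); ((11, 12), (12, 11)); ((12, 11), (11, 12)); ((12, 12), (11, 11)); ((13, 10), (10, 13)); ((13, 13), (10, 10)); ((14, 9), (9, 14)); ((14, 14), (9, 9))];
  [:: ((3, 11), (7, 13)); ((3, 13), (7, 11)); ((4, 10), (8, 12)); ((4, 12), (8, 10)); ((7, 11), (3, 13)); ((7, 13), (3, 11)); ((8, 10), (4, 12)); ((8, 12), (4, 10)); ((9, 0), (14, 14)); ((9, 14), (14, 0)); ((14, 0), (9, 14)); ((14, 14), (9, 0))];
  [:: ((2, 11), (6, 14)); ((2, 14), (6, 11)); ((4, 9), (8, 12)); ((4, 12), (8, 9)); ((6, 11), (2, 14)); ((6, 14), (2, 11)); ((8, 9), (4, 12)); ((8, 12), (4, 9)); ((10, 0), (13, 13)); ((10, 13), (13, 0)); ((13, 0), (10, 13)); ((13, 13), (10, 0))];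
  [:: ((2, 10), (6, 14)); ((2, 14), (6, 10)); ((3, 9), (7, 13)); ((3, 13), (7, 9)); ((6, 10), (2, 14)); ((6, 14), (2, 10)); ((7, 9), (3, 13)); ((7, 13), (3, 9)); ((11, 0), (12, 12)); ((11, 12), (12, 0)); ((12, 0), (11, 12)); ((12, 12), (11, 0))];
  [:: ((1, 13), (5, 14)); ((1, 14), (5, 13)); ((4, 9), (8, 10)); ((4, 10), (8, 9)); ((5, 13), (1, 14)); ((5, 14), (1, 13)); ((8, 9), (4, 10)); ((8, 10), (4, 9)); ((11, 0), (12, 11)); ((11, 11), (12, 0)); ((12, 0), (11, 11)); ((12, 11), (11, 0))];
  [:: ((1, 12), (5, 14)); ((1, 14), (5, 12)); ((3, 9), (7, 11)); ((3, 11), (7, 9)); ((5, 12), (1, 14)); ((5, 14), (1, 12)); ((7, 9), (3, 11)); ((7, 11), (3, 9)); ((10, 0), (13, 10)); ((10, 10), (13, 0)); ((13, 0), (10, 10)); ((13, 10), (10, 0))];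
  [:: ((1, 12), (5, 13)); ((1, 13), (5, 12)); ((2, 10), (6, 11)); ((2, 11), (6, 10)); ((5, 12), (1, 13)); ((5, 13), (1, 12)); ((6, 10), (2, 11)); ((6, 11), (2, 10)); ((9, 0), (14, 9)); ((9, 9), (14, 0)); ((14, 0), (9, 9)); ((14, 9), (9, 0))];
  [:: ((6, 6), (14, 14)); ((6, 14), (14, 6)); ((7, 7), (13, 13)); ((7, 13), (13, 7)); ((8, 8), (12, 12)); ((8, 12), (12, 8)); ((12, 8), (8, 12)); ((12, 12), (8, 8)); ((13, 7), (7, 13)); ((13, 13), (7, 7)); ((14, 6), (6, 14)); ((14, 14), (6, 6))];
  [:: ((3, 8), (10, 13)); ((3, 13), (10, 8)); ((4, 7), (11, 12)); ((4, 12), (11, 7)); ((6, 1), (14, 14)); ((6, 14), (14, 1)); ((10, 8), (3, 13)); ((10, 13), (3, 8)); ((11, 7), (4, 12)); ((11, 12), (4, 7)); ((14, 1), (6, 14)); ((14, 14), (6, 1))];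
  [:: ((2, 8), (9, 14)); ((2, 14), (9, 8)); ((4, 6), (11, 12)); ((4, 12), (11, 6)); ((7, 1), (13, 13)); ((7, 13), (13, 1)); ((9, 8), (2, 14)); ((9, 14), (2, 8)); ((11, 6), (4, 12)); ((11, 12), (4, 6)); ((13, 1), (7, 13)); ((13, 13), (7, 1))];
  [:: ((2, 7), (9, 14)); ((2, 14), (9, 7)); ((3, 6), (10, 13)); ((3, 13), (10, 6)); ((8, 1), (12, 12)); ((8, 12), (12, 1)); ((9, 7), (2, 14)); ((9, 14), (2, 7)); ((10, 6), (3, 13)); ((10, 13), (3, 6)); ((12, 1), (8, 12)); ((12, 12), (8, 1))];
  [:: ((0, 13), (5, 14)); ((0, 14), (5, 13)); ((4, 6), (11, 7)); ((4, 7), (11, 6)); ((5, 13), (0, 14)); ((5, 14), (0, 13)); ((8, 1), (12, 8)); ((8, 8), (12, 1)); ((11, 6), (4, 7)); ((11, 7), (4, 6)); ((12, 1), (8, 8)); ((12, 8), (8, 1))];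
  [:: ((0, 12), (5, 14)); ((0, 14), (5, 12)); ((3, 6), (10, 8)); ((3, 8), (10, 6)); ((5, 12), (0, 14)); ((5, 14), (0, 12)); ((7, 1), (13, 7)); ((7, 7), (13, 1)); ((10, 6), (3, 8)); ((10, 8), (3, 6)); ((13, 1), (7, 7)); ((13, 7), (7, 1))];
  [:: ((0, 12), (5, 13)); ((0, 13), (5, 12)); ((2, 7), (9, 8)); ((2, 8), (9, 7)); ((5, 12), (0, 13)); ((5, 13), (0, 12)); ((6, 1), (14, 6)); ((6, 6), (14, 1)); ((9, 7), (2, 8)); ((9, 8), (2, 7)); ((14, 1), (6, 6)); ((14, 6), (6, 1))];
  [:: ((5, 5), (14, 14)); ((5, 14), (14, 5)); ((7, 7), (11, 11)); ((7, 11), (11, 7)); ((8, 8), (10, 10)); ((8, 10), (10, 8)); ((10, 8), (8, 10)); ((10, 10), (8, 8)); ((11, 7), (7, 11)); ((11, 11), (7, 7)); ((14, 5), (5, 14)); ((14, 14), (5, 5))];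
  [:: ((3, 8), (12, 11)); ((3, 11), (12, 8)); ((4, 7), (13, 10)); ((4, 10), (13, 7)); ((5, 2), (14, 14)); ((5, 14), (14, 2)); ((12, 8), (3, 11)); ((12, 11), (3, 8)); ((13, 7), (4, 10)); ((13, 10), (4, 7)); ((14, 2), (5, 14)); ((14, 14), (5, 2))];
  [:: ((1, 8), (9, 14)); ((1, 14), (9, 8)); ((4, 5), (13, 10)); ((4, 10), (13, 5)); ((7, 2), (11, 11)); ((7, 11), (11, 2)); ((9, 8), (1, 14)); ((9, 14), (1, 8)); ((11, 2), (7, 11)); ((11, 11), (7, 2)); ((13, 5), (4, 10)); ((13, 10), (4, 5))];
  [:: ((1, 7), (9, 14)); ((1, 14), (9, 7)); ((3, 5), (12, 11)); ((3, 11), (12, 5)); ((8, 2), (10, 10)); ((8, 10), (10, 2)); ((9, 7), (1, 14)); ((9, 14), (1, 7)); ((10, 2), (8, 10)); ((10, 10), (8, 2)); ((12, 5), (3, 11)); ((12, 11), (3, 5))];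
  [:: ((0, 11), (6, 14)); ((0, 14), (6, 11)); ((4, 5), (13, 7)); ((4, 7), (13, 5)); ((6, 11), (0, 14)); ((6, 14), (0, 11)); ((8, 2), (10, 8)); ((8, 8), (10, 2)); ((10, 2), (8, 8)); ((10, 8), (8, 2)); ((13, 5), (4, 7)); ((13, 7), (4, 5))];
  [:: ((0, 10), (6, 14)); ((0, 14), (6, 10)); ((3, 5), (12, 8)); ((3, 8), (12, 5)); ((6, 10), (0, 14)); ((6, 14), (0, 10)); ((7, 2), (11, 7)); ((7, 7), (11, 2)); ((11, 2), (7, 7)); ((11, 7), (7, 2)); ((12, 5), (3, 8)); ((12, 8), (3, 5))];
  [:: ((0, 10), (6, 11)); ((0, 11), (6, 10)); ((1, 7), (9, 8)); ((1, 8), (9, 7)); ((5, 2), (14, 5)); ((5, 5), (14, 2)); ((6, 10), (0, 11)); ((6, 11), (0, 10)); ((9, 7), (1, 8)); ((9, 8), (1, 7)); ((14, 2), (5, 5)); ((14, 5), (5, 2))];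
  [:: ((5, 5), (13, 13)); ((5, 13), (13, 5)); ((6, 6), (11, 11)); ((6, 11), (11, 6)); ((8, 8), (9, 9)); ((8, 9), (9, 8)); ((9, 8), (8, 9)); ((9, 9), (8, 8)); ((11, 6), (6, 11)); ((11, 11), (6, 6)); ((13, 5), (5, 13)); ((13, 13), (5, 5))];
  [:: ((2, 8), (12, 11)); ((2, 11), (12, 8)); ((4, 6), (14, 9)); ((4, 9), (14, 6)); ((5, 3), (13, 13)); ((5, 13), (13, 3)); ((12, 8), (2, 11)); ((12, 11), (2, 8)); ((13, 3), (5, 13)); ((13, 13), (5, 3)); ((14, 6), (4, 9)); ((14, 9), (4, 6))];
  [:: ((1, 8), (10, 13)); ((1, 13), (10, 8)); ((4, 5), (14, 9)); ((4, 9), (14, 5)); ((6, 3), (11, 11)); ((6, 11), (11, 3)); ((10, 8), (1, 13)); ((10, 13), (1, 8)); ((11, 3), (6, 11)); ((11, 11), (6, 3)); ((14, 5), (4, 9)); ((14, 9), (4, 5))];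
  [:: ((1, 6), (10, 13)); ((1, 13), (10, 6)); ((2, 5), (12, 11)); ((2, 11), (12, 5)); ((8, 3), (9, 9)); ((8, 9), (9, 3)); ((9, 3), (8, 9)); ((9, 9), (8, 3)); ((10, 6), (1, 13)); ((10, 13), (1, 6)); ((12, 5), (2, 11)); ((12, 11), (2, 5))];
  [:: ((0, 11), (7, 13)); ((0, 13), (7, 11)); ((4, 5), (14, 6)); ((4, 6), (14, 5)); ((7, 11), (0, 13)); ((7, 13), (0, 11)); ((8, 3), (9, 8)); ((8, 8), (9, 3)); ((9, 3), (8, 8)); ((9, 8), (8, 3)); ((14, 5), (4, 6)); ((14, 6), (4, 5))];
  [:: ((0, 9), (7, 13)); ((0, 13), (7, 9)); ((2, 5), (12, 8)); ((2, 8), (12, 5)); ((6, 3), (11, 6)); ((6, 6), (11, 3)); ((7, 9), (0, 13)); ((7, 13), (0, 9)); ((11, 3), (6, 6)); ((11, 6), (6, 3)); ((12, 5), (2, 8)); ((12, 8), (2, 5))];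
  [:: ((0, 9), (7, 11)); ((0, 11), (7, 9)); ((1, 6), (10, 8)); ((1, 8), (10, 6)); ((5, 3), (13, 5)); ((5, 5), (13, 3)); ((7, 9), (0, 11)); ((7, 11), (0, 9)); ((10, 6), (1, 8)); ((10, 8), (1, 6)); ((13, 3), (5, 5)); ((13, 5), (5, 3))];
  [:: ((5, 5), (12, 12)); ((5, 12), (12, 5)); ((6, 6), (10, 10)); ((6, 10), (10, 6)); ((7, 7), (9, 9)); ((7, 9), (9, 7)); ((9, 7), (7, 9)); ((9, 9), (7, 7)); ((10, 6), (6, 10)); ((10, 10), (6, 6)); ((12, 5), (5, 12)); ((12, 12), (5, 5))];
  [:: ((2, 7), (13, 10)); ((2, 10), (13, 7)); ((3, 6), (14, 9)); ((3, 9), (14, 6)); ((5, 4), (12, 12)); ((5, 12), (12, 4)); ((12, 4), (5, 12)); ((12, 12), (5, 4)); ((13, 7), (2, 10)); ((13, 10), (2, 7)); ((14, 6), (3, 9)); ((14, 9), (3, 6))];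
  [:: ((1, 7), (11, 12)); ((1, 12), (11, 7)); ((3, 5), (14, 9)); ((3, 9), (14, 5)); ((6, 4), (10, 10)); ((6, 10), (10, 4)); ((10, 4), (6, 10)); ((10, 10), (6, 4)); ((11, 7), (1, 12)); ((11, 12), (1, 7)); ((14, 5), (3, 9)); ((14, 9), (3, 5))];
  [:: ((1, 6), (11, 12)); ((1, 12), (11, 6)); ((2, 5), (13, 10)); ((2, 10), (13, 5)); ((7, 4), (9, 9)); ((7, 9), (9, 4)); ((9, 4), (7, 9)); ((9, 9), (7, 4)); ((11, 6), (1, 12)); ((11, 12), (1, 6)); ((13, 5), (2, 10)); ((13, 10), (2, 5))];
  [:: ((0, 10), (8, 12)); ((0, 12), (8, 10)); ((3, 5), (14, 6)); ((3, 6), (14, 5)); ((7, 4), (9, 7)); ((7, 7), (9, 4)); ((8, 10), (0, 12)); ((8, 12), (0, 10)); ((9, 4), (7, 7)); ((9, 7), (7, 4)); ((14, 5), (3, 6)); ((14, 6), (3, 5))];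
  [:: ((0, 9), (8, 12)); ((0, 12), (8, 9)); ((2, 5), (13, 7)); ((2, 7), (13, 5)); ((6, 4), (10, 6)); ((6, 6), (10, 4)); ((8, 9), (0, 12)); ((8, 12), (0, 9)); ((10, 4), (6, 6)); ((10, 6), (6, 4)); ((13, 5), (2, 7)); ((13, 7), (2, 5))];
  [:: ((0, 9), (8, 10)); ((0, 10), (8, 9)); ((1, 6), (11, 7)); ((1, 7), (11, 6)); ((5, 4), (12, 5)); ((5, 5), (12, 4)); ((8, 9), (0, 10)); ((8, 10), (0, 9)); ((11, 6), (1, 7)); ((11, 7), (1, 6)); ((12, 4), (5, 5)); ((12, 5), (5, 4))];
  [:: ((2, 5), (14, 14)); ((2, 14), (14, 5)); ((7, 4), (10, 13)); ((7, 13), (10, 4)); ((8, 3), (11, 12)); ((8, 12), (11, 3)); ((10, 4), (7, 13)); ((10, 13), (7, 4)); ((11, 3), (8, 12)); ((11, 12), (8, 3)); ((14, 5), (2, 14)); ((14, 14), (2, 5))];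
  [:: ((3, 5), (13, 13)); ((3, 13), (13, 5)); ((6, 4), (9, 14)); ((6, 14), (9, 4)); ((8, 2), (11, 12)); ((8, 12), (11, 2)); ((9, 4), (6, 14)); ((9, 14), (6, 4)); ((11, 2), (8, 12)); ((11, 12), (8, 2)); ((13, 5), (3, 13)); ((13, 13), (3, 5))];
  [:: ((4, 5), (12, 12)); ((4, 12), (12, 5)); ((6, 3), (9, 14)); ((6, 14), (9, 3)); ((7, 2), (10, 13)); ((7, 13), (10, 2)); ((9, 3), (6, 14)); ((9, 14), (6, 3)); ((10, 2), (7, 13)); ((10, 13), (7, 2)); ((12, 5), (4, 12)); ((12, 12), (4, 5))];
  [:: ((2, 2), (14, 14)); ((2, 14), (14, 2)); ((3, 3), (13, 13)); ((3, 13), (13, 3)); ((4, 4), (12, 12)); ((4, 12), (12, 4)); ((12, 4), (4, 12)); ((12, 12), (4, 4)); ((13, 3), (3, 13)); ((13, 13), (3, 3)); ((14, 2), (2, 14)); ((14, 14), (2, 2))];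
  [:: ((0, 13), (1, 14)); ((0, 14), (1, 13)); ((1, 13), (0, 14)); ((1, 14), (0, 13)); ((4, 4), (12, 5)); ((4, 5), (12, 4)); ((8, 2), (11, 3)); ((8, 3), (11, 2)); ((11, 2), (8, 3)); ((11, 3), (8, 2)); ((12, 4), (4, 5)); ((12, 5), (4, 4))];
  [:: ((0, 12), (1, 14)); ((0, 14), (1, 12)); ((1, 12), (0, 14)); ((1, 14), (0, 12)); ((3, 3), (13, 5)); ((3, 5), (13, 3)); ((7, 2), (10, 4)); ((7, 4), (10, 2)); ((10, 2), (7, 4)); ((10, 4), (7, 2)); ((13, 3), (3, 5)); ((13, 5), (3, 3))];
  [:: ((0, 12), (1, 13)); ((0, 13), (1, 12)); ((1, 12), (0, 13)); ((1, 13), (0, 12)); ((2, 2), (14, 5)); ((2, 5), (14, 2)); ((6, 3), (9, 4)); ((6, 4), (9, 3)); ((9, 3), (6, 4)); ((9, 4), (6, 3)); ((14, 2), (2, 5)); ((14, 5), (2, 2))];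
  [:: ((1, 6), (14, 14)); ((1, 14), (14, 6)); ((7, 4), (12, 11)); ((7, 11), (12, 4)); ((8, 3), (13, 10)); ((8, 10), (13, 3)); ((12, 4), (7, 11)); ((12, 11), (7, 4)); ((13, 3), (8, 10)); ((13, 10), (8, 3)); ((14, 6), (1, 14)); ((14, 14), (1, 6))];
  [:: ((3, 6), (11, 11)); ((3, 11), (11, 6)); ((5, 4), (9, 14)); ((5, 14), (9, 4)); ((8, 1), (13, 10)); ((8, 10), (13, 1)); ((9, 4), (5, 14)); ((9, 14), (5, 4)); ((11, 6), (3, 11)); ((11, 11), (3, 6)); ((13, 1), (8, 10)); ((13, 10), (8, 1))];
  [:: ((4, 6), (10, 10)); ((4, 10), (10, 6)); ((5, 3), (9, 14)); ((5, 14), (9, 3)); ((7, 1), (12, 11)); ((7, 11), (12, 1)); ((9, 3), (5, 14)); ((9, 14), (5, 3)); ((10, 6), (4, 10)); ((10, 10), (4, 6)); ((12, 1), (7, 11)); ((12, 11), (7, 1))];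
  [:: ((1, 1), (14, 14)); ((1, 14), (14, 1)); ((3, 3), (11, 11)); ((3, 11), (11, 3)); ((4, 4), (10, 10)); ((4, 10), (10, 4)); ((10, 4), (4, 10)); ((10, 10), (4, 4)); ((11, 3), (3, 11)); ((11, 11), (3, 3)); ((14, 1), (1, 14)); ((14, 14), (1, 1))];
  [:: ((0, 11), (2, 14)); ((0, 14), (2, 11)); ((2, 11), (0, 14)); ((2, 14), (0, 11)); ((4, 4), (10, 6)); ((4, 6), (10, 4)); ((8, 1), (13, 3)); ((8, 3), (13, 1)); ((10, 4), (4, 6)); ((10, 6), (4, 4)); ((13, 1), (8, 3)); ((13, 3), (8, 1))];
  [:: ((0, 10), (2, 14)); ((0, 14), (2, 10)); ((2, 10), (0, 14)); ((2, 14), (0, 10)); ((3, 3), (11, 6)); ((3, 6), (11, 3)); ((7, 1), (12, 4)); ((7, 4), (12, 1)); ((11, 3), (3, 6)); ((11, 6), (3, 3)); ((12, 1), (7, 4)); ((12, 4), (7, 1))];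
  [:: ((0, 10), (2, 11)); ((0, 11), (2, 10)); ((1, 1), (14, 6)); ((1, 6), (14, 1)); ((2, 10), (0, 11)); ((2, 11), (0, 10)); ((5, 3), (9, 4)); ((5, 4), (9, 3)); ((9, 3), (5, 4)); ((9, 4), (5, 3)); ((14, 1), (1, 6)); ((14, 6), (1, 1))];
  [:: ((1, 7), (13, 13)); ((1, 13), (13, 7)); ((6, 4), (12, 11)); ((6, 11), (12, 4)); ((8, 2), (14, 9)); ((8, 9), (14, 2)); ((12, 4), (6, 11)); ((12, 11), (6, 4)); ((13, 7), (1, 13)); ((13, 13), (1, 7)); ((14, 2), (8, 9)); ((14, 9), (8, 2))];
  [:: ((2, 7), (11, 11)); ((2, 11), (11, 7)); ((5, 4), (10, 13)); ((5, 13), (10, 4)); ((8, 1), (14, 9)); ((8, 9), (14, 1)); ((10, 4), (5, 13)); ((10, 13), (5, 4)); ((11, 7), (2, 11)); ((11, 11), (2, 7)); ((14, 1), (8, 9)); ((14, 9), (8, 1))];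
  [:: ((4, 7), (9, 9)); ((4, 9), (9, 7)); ((5, 2), (10, 13)); ((5, 13), (10, 2)); ((6, 1), (12, 11)); ((6, 11), (12, 1)); ((9, 7), (4, 9)); ((9, 9), (4, 7)); ((10, 2), (5, 13)); ((10, 13), (5, 2)); ((12, 1), (6, 11)); ((12, 11), (6, 1))];
  [:: ((1, 1), (13, 13)); ((1, 13), (13, 1)); ((2, 2), (11, 11)); ((2, 11), (11, 2)); ((4, 4), (9, 9)); ((4, 9), (9, 4)); ((9, 4), (4, 9)); ((9, 9), (4, 4)); ((11, 2), (2, 11)); ((11, 11), (2, 2)); ((13, 1), (1, 13)); ((13, 13), (1, 1))];
  [:: ((0, 11), (3, 13)); ((0, 13), (3, 11)); ((3, 11), (0, 13)); ((3, 13), (0, 11)); ((4, 4), (9, 7)); ((4, 7), (9, 4)); ((8, 1), (14, 2)); ((8, 2), (14, 1)); ((9, 4), (4, 7)); ((9, 7), (4, 4)); ((14, 1), (8, 2)); ((14, 2), (8, 1))];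
  [:: ((0, 9), (3, 13)); ((0, 13), (3, 9)); ((2, 2), (11, 7)); ((2, 7), (11, 2)); ((3, 9), (0, 13)); ((3, 13), (0, 9)); ((6, 1), (12, 4)); ((6, 4), (12, 1)); ((11, 2), (2, 7)); ((11, 7), (2, 2)); ((12, 1), (6, 4)); ((12, 4), (6, 1))];
  [:: ((0, 9), (3, 11)); ((0, 11), (3, 9)); ((1, 1), (13, 7)); ((1, 7), (13, 1)); ((3, 9), (0, 11)); ((3, 11), (0, 9)); ((5, 2), (10, 4)); ((5, 4), (10, 2)); ((10, 2), (5, 4)); ((10, 4), (5, 2)); ((13, 1), (1, 7)); ((13, 7), (1, 1))];
  [:: ((1, 8), (12, 12)); ((1, 12), (12, 8)); ((6, 3), (13, 10)); ((6, 10), (13, 3)); ((7, 2), (14, 9)); ((7, 9), (14, 2)); ((12, 8), (1, 12)); ((12, 12), (1, 8)); ((13, 3), (6, 10)); ((13, 10), (6, 3)); ((14, 2), (7, 9)); ((14, 9), (7, 2))];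
  [:: ((2, 8), (10, 10)); ((2, 10), (10, 8)); ((5, 3), (11, 12)); ((5, 12), (11, 3)); ((7, 1), (14, 9)); ((7, 9), (14, 1)); ((10, 8), (2, 10)); ((10, 10), (2, 8)); ((11, 3), (5, 12)); ((11, 12), (5, 3)); ((14, 1), (7, 9)); ((14, 9), (7, 1))];
  [:: ((3, 8), (9, 9)); ((3, 9), (9, 8)); ((5, 2), (11, 12)); ((5, 12), (11, 2)); ((6, 1), (13, 10)); ((6, 10), (13, 1)); ((9, 8), (3, 9)); ((9, 9), (3, 8)); ((11, 2), (5, 12)); ((11, 12), (5, 2)); ((13, 1), (6, 10)); ((13, 10), (6, 1))];
  [:: ((1, 1), (12, 12)); ((1, 12), (12, 1)); ((2, 2), (10, 10)); ((2, 10), (10, 2)); ((3, 3), (9, 9)); ((3, 9), (9, 3)); ((9, 3), (3, 9)); ((9, 9), (3, 3)); ((10, 2), (2, 10)); ((10, 10), (2, 2)); ((12, 1), (1, 12)); ((12, 12), (1, 1))];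
  [:: ((0, 10), (4, 12)); ((0, 12), (4, 10)); ((3, 3), (9, 8)); ((3, 8), (9, 3)); ((4, 10), (0, 12)); ((4, 12), (0, 10)); ((7, 1), (14, 2)); ((7, 2), (14, 1)); ((9, 3), (3, 8)); ((9, 8), (3, 3)); ((14, 1), (7, 2)); ((14, 2), (7, 1))];
  [:: ((0, 9), (4, 12)); ((0, 12), (4, 9)); ((2, 2), (10, 8)); ((2, 8), (10, 2)); ((4, 9), (0, 12)); ((4, 12), (0, 9)); ((6, 1), (13, 3)); ((6, 3), (13, 1)); ((10, 2), (2, 8)); ((10, 8), (2, 2)); ((13, 1), (6, 3)); ((13, 3), (6, 1))];
  [:: ((0, 9), (4, 10)); ((0, 10), (4, 9)); ((1, 1), (12, 8)); ((1, 8), (12, 1)); ((4, 9), (0, 10)); ((4, 10), (0, 9)); ((5, 2), (11, 3)); ((5, 3), (11, 2)); ((11, 2), (5, 3)); ((11, 3), (5, 2)); ((12, 1), (1, 8)); ((12, 8), (1, 1))];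
  [:: ((0, 9), (14, 14)); ((0, 14), (14, 9)); ((10, 4), (12, 8)); ((10, 8), (12, 4)); ((11, 3), (13, 7)); ((11, 7), (13, 3)); ((12, 4), (10, 8)); ((12, 8), (10, 4)); ((13, 3), (11, 7)); ((13, 7), (11, 3)); ((14, 9), (0, 14)); ((14, 14), (0, 9))];
  [:: ((3, 8), (8, 9)); ((3, 9), (8, 8)); ((5, 4), (6, 14)); ((5, 14), (6, 4)); ((6, 4), (5, 14)); ((6, 14), (5, 4)); ((8, 8), (3, 9)); ((8, 9), (3, 8)); ((11, 0), (13, 7)); ((11, 7), (13, 0)); ((13, 0), (11, 7)); ((13, 7), (11, 0))];
  [:: ((4, 7), (7, 9)); ((4, 9), (7, 7)); ((5, 3), (6, 14)); ((5, 14), (6, 3)); ((6, 3), (5, 14)); ((6, 14), (5, 3)); ((7, 7), (4, 9)); ((7, 9), (4, 7)); ((10, 0), (12, 8)); ((10, 8), (12, 0)); ((12, 0), (10, 8)); ((12, 8), (10, 0))];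
  [:: ((1, 8), (2, 14)); ((1, 14), (2, 8)); ((2, 8), (1, 14)); ((2, 14), (1, 8)); ((4, 4), (7, 9)); ((4, 9), (7, 4)); ((7, 4), (4, 9)); ((7, 9), (4, 4)); ((11, 0), (13, 3)); ((11, 3), (13, 0)); ((13, 0), (11, 3)); ((13, 3), (11, 0))];
  [:: ((1, 7), (2, 14)); ((1, 14), (2, 7)); ((2, 7), (1, 14)); ((2, 14), (1, 7)); ((3, 3), (8, 9)); ((3, 9), (8, 3)); ((8, 3), (3, 9)); ((8, 9), (3, 3)); ((10, 0), (12, 4)); ((10, 4), (12, 0)); ((12, 0), (10, 4)); ((12, 4), (10, 0))];
  [:: ((0, 0), (14, 14)); ((0, 14), (14, 0)); ((3, 3), (8, 8)); ((3, 8), (8, 3)); ((4, 4), (7, 7)); ((4, 7), (7, 4)); ((7, 4), (4, 7)); ((7, 7), (4, 4)); ((8, 3), (3, 8)); ((8, 8), (3, 3)); ((14, 0), (0, 14)); ((14, 14), (0, 0))];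
  [:: ((0, 0), (14, 9)); ((0, 9), (14, 0)); ((1, 7), (2, 8)); ((1, 8), (2, 7)); ((2, 7), (1, 8)); ((2, 8), (1, 7)); ((5, 3), (6, 4)); ((5, 4), (6, 3)); ((6, 3), (5, 4)); ((6, 4), (5, 3)); ((14, 0), (0, 9)); ((14, 9), (0, 0))];
  [:: ((0, 10), (13, 13)); ((0, 13), (13, 10)); ((9, 4), (12, 8)); ((9, 8), (12, 4)); ((11, 2), (14, 6)); ((11, 6), (14, 2)); ((12, 4), (9, 8)); ((12, 8), (9, 4)); ((13, 10), (0, 13)); ((13, 13), (0, 10)); ((14, 2), (11, 6)); ((14, 6), (11, 2))];
  [:: ((2, 8), (8, 10)); ((2, 10), (8, 8)); ((5, 4), (7, 13)); ((5, 13), (7, 4)); ((7, 4), (5, 13)); ((7, 13), (5, 4)); ((8, 8), (2, 10)); ((8, 10), (2, 8)); ((11, 0), (14, 6)); ((11, 6), (14, 0)); ((14, 0), (11, 6)); ((14, 6), (11, 0))];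
  [:: ((4, 6), (6, 10)); ((4, 10), (6, 6)); ((5, 2), (7, 13)); ((5, 13), (7, 2)); ((6, 6), (4, 10)); ((6, 10), (4, 6)); ((7, 2), (5, 13)); ((7, 13), (5, 2)); ((9, 0), (12, 8)); ((9, 8), (12, 0)); ((12, 0), (9, 8)); ((12, 8), (9, 0))];
  [:: ((1, 8), (3, 13)); ((1, 13), (3, 8)); ((3, 8), (1, 13)); ((3, 13), (1, 8)); ((4, 4), (6, 10)); ((4, 10), (6, 4)); ((6, 4), (4, 10)); ((6, 10), (4, 4)); ((11, 0), (14, 2)); ((11, 2), (14, 0)); ((14, 0), (11, 2)); ((14, 2), (11, 0))];
  [:: ((1, 6), (3, 13)); ((1, 13), (3, 6)); ((2, 2), (8, 10)); ((2, 10), (8, 2)); ((3, 6), (1, 13)); ((3, 13), (1, 6)); ((8, 2), (2, 10)); ((8, 10), (2, 2)); ((9, 0), (12, 4)); ((9, 4), (12, 0)); ((12, 0), (9, 4)); ((12, 4), (9, 0))];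
  [:: ((0, 0), (13, 13)); ((0, 13), (13, 0)); ((2, 2), (8, 8)); ((2, 8), (8, 2)); ((4, 4), (6, 6)); ((4, 6), (6, 4)); ((6, 4), (4, 6)); ((6, 6), (4, 4)); ((8, 2), (2, 8)); ((8, 8), (2, 2)); ((13, 0), (0, 13)); ((13, 13), (0, 0))];
  [:: ((0, 0), (13, 10)); ((0, 10), (13, 0)); ((1, 6), (3, 8)); ((1, 8), (3, 6)); ((3, 6), (1, 8)); ((3, 8), (1, 6)); ((5, 2), (7, 4)); ((5, 4), (7, 2)); ((7, 2), (5, 4)); ((7, 4), (5, 2)); ((13, 0), (0, 10)); ((13, 10), (0, 0))];
  [:: ((0, 11), (12, 12)); ((0, 12), (12, 11)); ((9, 3), (13, 7)); ((9, 7), (13, 3)); ((10, 2), (14, 6)); ((10, 6), (14, 2)); ((12, 11), (0, 12)); ((12, 12), (0, 11)); ((13, 3), (9, 7)); ((13, 7), (9, 3)); ((14, 2), (10, 6)); ((14, 6), (10, 2))];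
  [:: ((2, 7), (7, 11)); ((2, 11), (7, 7)); ((5, 3), (8, 12)); ((5, 12), (8, 3)); ((7, 7), (2, 11)); ((7, 11), (2, 7)); ((8, 3), (5, 12)); ((8, 12), (5, 3)); ((10, 0), (14, 6)); ((10, 6), (14, 0)); ((14, 0), (10, 6)); ((14, 6), (10, 0))];
  [:: ((3, 6), (6, 11)); ((3, 11), (6, 6)); ((5, 2), (8, 12)); ((5, 12), (8, 2)); ((6, 6), (3, 11)); ((6, 11), (3, 6)); ((8, 2), (5, 12)); ((8, 12), (5, 2)); ((9, 0), (13, 7)); ((9, 7), (13, 0)); ((13, 0), (9, 7)); ((13, 7), (9, 0))];
  [:: ((1, 7), (4, 12)); ((1, 12), (4, 7)); ((3, 3), (6, 11)); ((3, 11), (6, 3)); ((4, 7), (1, 12)); ((4, 12), (1, 7)); ((6, 3), (3, 11)); ((6, 11), (3, 3)); ((10, 0), (14, 2)); ((10, 2), (14, 0)); ((14, 0), (10, 2)); ((14, 2), (10, 0))];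
  [:: ((1, 6), (4, 12)); ((1, 12), (4, 6)); ((2, 2), (7, 11)); ((2, 11), (7, 2)); ((4, 6), (1, 12)); ((4, 12), (1, 6)); ((7, 2), (2, 11)); ((7, 11), (2, 2)); ((9, 0), (13, 3)); ((9, 3), (13, 0)); ((13, 0), (9, 3)); ((13, 3), (9, 0))];
  [:: ((0, 0), (12, 12)); ((0, 12), (12, 0)); ((2, 2), (7, 7)); ((2, 7), (7, 2)); ((3, 3), (6, 6)); ((3, 6), (6, 3)); ((6, 3), (3, 6)); ((6, 6), (3, 3)); ((7, 2), (2, 7)); ((7, 7), (2, 2)); ((12, 0), (0, 12)); ((12, 12), (0, 0))];
  [:: ((0, 0), (12, 11)); ((0, 11), (12, 0)); ((1, 6), (4, 7)); ((1, 7), (4, 6)); ((4, 6), (1, 7)); ((4, 7), (1, 6)); ((5, 2), (8, 3)); ((5, 3), (8, 2)); ((8, 2), (5, 3)); ((8, 3), (5, 2)); ((12, 0), (0, 11)); ((12, 11), (0, 0))];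
  [:: ((0, 11), (11, 12)); ((0, 12), (11, 11)); ((9, 4), (10, 8)); ((9, 8), (10, 4)); ((10, 4), (9, 8)); ((10, 8), (9, 4)); ((11, 11), (0, 12)); ((11, 12), (0, 11)); ((13, 1), (14, 5)); ((13, 5), (14, 1)); ((14, 1), (13, 5)); ((14, 5), (13, 1))];
  [:: ((1, 8), (8, 12)); ((1, 12), (8, 8)); ((6, 4), (7, 11)); ((6, 11), (7, 4)); ((7, 4), (6, 11)); ((7, 11), (6, 4)); ((8, 8), (1, 12)); ((8, 12), (1, 8)); ((13, 0), (14, 5)); ((13, 5), (14, 0)); ((14, 0), (13, 5)); ((14, 5), (13, 0))];
  [:: ((4, 5), (5, 12)); ((4, 12), (5, 5)); ((5, 5), (4, 12)); ((5, 12), (4, 5)); ((6, 1), (7, 11)); ((6, 11), (7, 1)); ((7, 1), (6, 11)); ((7, 11), (6, 1)); ((9, 0), (10, 8)); ((9, 8), (10, 0)); ((10, 0), (9, 8)); ((10, 8), (9, 0))];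
  [:: ((2, 8), (3, 11)); ((2, 11), (3, 8)); ((3, 8), (2, 11)); ((3, 11), (2, 8)); ((4, 4), (5, 12)); ((4, 12), (5, 4)); ((5, 4), (4, 12)); ((5, 12), (4, 4)); ((13, 0), (14, 1)); ((13, 1), (14, 0)); ((14, 0), (13, 1)); ((14, 1), (13, 0))];
  [:: ((1, 1), (8, 12)); ((1, 12), (8, 1)); ((2, 5), (3, 11)); ((2, 11), (3, 5)); ((3, 5), (2, 11)); ((3, 11), (2, 5)); ((8, 1), (1, 12)); ((8, 12), (1, 1)); ((9, 0), (10, 4)); ((9, 4), (10, 0)); ((10, 0), (9, 4)); ((10, 4), (9, 0))];
  [:: ((0, 0), (11, 12)); ((0, 12), (11, 0)); ((2, 5), (3, 8)); ((2, 8), (3, 5)); ((3, 5), (2, 8)); ((3, 8), (2, 5)); ((6, 1), (7, 4)); ((6, 4), (7, 1)); ((7, 1), (6, 4)); ((7, 4), (6, 1)); ((11, 0), (0, 12)); ((11, 12), (0, 0))];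
  [:: ((0, 0), (11, 11)); ((0, 11), (11, 0)); ((1, 1), (8, 8)); ((1, 8), (8, 1)); ((4, 4), (5, 5)); ((4, 5), (5, 4)); ((5, 4), (4, 5)); ((5, 5), (4, 4)); ((8, 1), (1, 8)); ((8, 8), (1, 1)); ((11, 0), (0, 11)); ((11, 11), (0, 0))];
  [:: ((0, 10), (10, 13)); ((0, 13), (10, 10)); ((9, 3), (11, 7)); ((9, 7), (11, 3)); ((10, 10), (0, 13)); ((10, 13), (0, 10)); ((11, 3), (9, 7)); ((11, 7), (9, 3)); ((12, 1), (14, 5)); ((12, 5), (14, 1)); ((14, 1), (12, 5)); ((14, 5), (12, 1))];
  [:: ((1, 7), (7, 13)); ((1, 13), (7, 7)); ((6, 3), (8, 10)); ((6, 10), (8, 3)); ((7, 7), (1, 13)); ((7, 13), (1, 7)); ((8, 3), (6, 10)); ((8, 10), (6, 3)); ((12, 0), (14, 5)); ((12, 5), (14, 0)); ((14, 0), (12, 5)); ((14, 5), (12, 0))];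
  [:: ((3, 5), (5, 13)); ((3, 13), (5, 5)); ((5, 5), (3, 13)); ((5, 13), (3, 5)); ((6, 1), (8, 10)); ((6, 10), (8, 1)); ((8, 1), (6, 10)); ((8, 10), (6, 1)); ((9, 0), (11, 7)); ((9, 7), (11, 0)); ((11, 0), (9, 7)); ((11, 7), (9, 0))];
  [:: ((2, 7), (4, 10)); ((2, 10), (4, 7)); ((3, 3), (5, 13)); ((3, 13), (5, 3)); ((4, 7), (2, 10)); ((4, 10), (2, 7)); ((5, 3), (3, 13)); ((5, 13), (3, 3)); ((12, 0), (14, 1)); ((12, 1), (14, 0)); ((14, 0), (12, 1)); ((14, 1), (12, 0))];
  [:: ((1, 1), (7, 13)); ((1, 13), (7, 1)); ((2, 5), (4, 10)); ((2, 10), (4, 5)); ((4, 5), (2, 10)); ((4, 10), (2, 5)); ((7, 1), (1, 13)); ((7, 13), (1, 1)); ((9, 0), (11, 3)); ((9, 3), (11, 0)); ((11, 0), (9, 3)); ((11, 3), (9, 0))];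
  [:: ((0, 0), (10, 13)); ((0, 13), (10, 0)); ((2, 5), (4, 7)); ((2, 7), (4, 5)); ((4, 5), (2, 7)); ((4, 7), (2, 5)); ((6, 1), (8, 3)); ((6, 3), (8, 1)); ((8, 1), (6, 3)); ((8, 3), (6, 1)); ((10, 0), (0, 13)); ((10, 13), (0, 0))];
  [:: ((0, 0), (10, 10)); ((0, 10), (10, 0)); ((1, 1), (7, 7)); ((1, 7), (7, 1)); ((3, 3), (5, 5)); ((3, 5), (5, 3)); ((5, 3), (3, 5)); ((5, 5), (3, 3)); ((7, 1), (1, 7)); ((7, 7), (1, 1)); ((10, 0), (0, 10)); ((10, 10), (0, 0))];
  [:: ((0, 9), (9, 14)); ((0, 14), (9, 9)); ((9, 9), (0, 14)); ((9, 14), (0, 9)); ((10, 2), (11, 6)); ((10, 6), (11, 2)); ((11, 2), (10, 6)); ((11, 6), (10, 2)); ((12, 1), (13, 5)); ((12, 5), (13, 1)); ((13, 1), (12, 5)); ((13, 5), (12, 1))];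
  [:: ((1, 6), (6, 14)); ((1, 14), (6, 6)); ((6, 6), (1, 14)); ((6, 14), (1, 6)); ((7, 2), (8, 9)); ((7, 9), (8, 2)); ((8, 2), (7, 9)); ((8, 9), (7, 2)); ((12, 0), (13, 5)); ((12, 5), (13, 0)); ((13, 0), (12, 5)); ((13, 5), (12, 0))];
  [:: ((2, 5), (5, 14)); ((2, 14), (5, 5)); ((5, 5), (2, 14)); ((5, 14), (2, 5)); ((7, 1), (8, 9)); ((7, 9), (8, 1)); ((8, 1), (7, 9)); ((8, 9), (7, 1)); ((10, 0), (11, 6)); ((10, 6), (11, 0)); ((11, 0), (10, 6)); ((11, 6), (10, 0))];
  [:: ((2, 2), (5, 14)); ((2, 14), (5, 2)); ((3, 6), (4, 9)); ((3, 9), (4, 6)); ((4, 6), (3, 9)); ((4, 9), (3, 6)); ((5, 2), (2, 14)); ((5, 14), (2, 2)); ((12, 0), (13, 1)); ((12, 1), (13, 0)); ((13, 0), (12, 1)); ((13, 1), (12, 0))];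
  [:: ((1, 1), (6, 14)); ((1, 14), (6, 1)); ((3, 5), (4, 9)); ((3, 9), (4, 5)); ((4, 5), (3, 9)); ((4, 9), (3, 5)); ((6, 1), (1, 14)); ((6, 14), (1, 1)); ((10, 0), (11, 2)); ((10, 2), (11, 0)); ((11, 0), (10, 2)); ((11, 2), (10, 0))];
  [:: ((0, 0), (9, 14)); ((0, 14), (9, 0)); ((3, 5), (4, 6)); ((3, 6), (4, 5)); ((4, 5), (3, 6)); ((4, 6), (3, 5)); ((7, 1), (8, 2)); ((7, 2), (8, 1)); ((8, 1), (7, 2)); ((8, 2), (7, 1)); ((9, 0), (0, 14)); ((9, 14), (0, 0))];
  [:: ((0, 0), (9, 9)); ((0, 9), (9, 0)); ((1, 1), (6, 6)); ((1, 6), (6, 1)); ((2, 2), (5, 5)); ((2, 5), (5, 2)); ((5, 2), (2, 5)); ((5, 5), (2, 2)); ((6, 1), (1, 6)); ((6, 6), (1, 1)); ((9, 0), (0, 9)); ((9, 9), (0, 0))]].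
Definition a0 : nat * nat := (0, 0).
Definition b0 : nat * nat := (1, 12).

Definition nbEt (t : seq (seq ((nat * nat) * (nat * nat)))) (v : seq (nat * nat)) (a : nat * nat) :=
  nth [::] t (index a v).
Definition nbNt t v (a : nat * nat) := map fst (nbEt t v a).
Definition nbE (a : nat * nat) := nbEt tbl Vn a.
Definition nbN (a : nat * nat) := nbNt tbl Vn a.
Definition validN := all (fun a => all (fun e =>
  [&& e.1 \in Vn, e.2 \in Vn, a != e.1 & condN a e.1 e.2]) (nbE a)) Vn.
Lemma validN_ok : validN.
Proof. vm_compute. reflexivity. Qed.
Lemma nbN_adj a b : a \in Vn -> b \in nbN a -> adjN a b && (b \in Vn).
Proof.
move=> aV /mapP[e eN ->].
have /allP/(_ a aV)/allP/(_ e eN)/and4P[h1 h2 h3 h4] := validN_ok.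
rewrite h1 andbT /adjN h3 andTb; apply/hasP; by exists e.2.
Qed.

Fixpoint reachNt t v k a := if k is k'.+1 then
  let r := reachNt t v k' a in undup (r ++ flatten (map (nbNt t v) r)) else [:: a].
Definition reachN k a := reachNt tbl Vn k a.
Definition diamN := let t := tbl in let v := Vn in
  all (fun a => let r := reachNt t v 3 a in all (fun b => b \in r) v) v.
Lemma diamN_ok : diamN.
Proof. vm_compute. reflexivity. Qed.

Lemma reachN_path k a b : a \in Vn -> b \in reachNt tbl Vn k a ->
  exists s, [/\ size s <= k, path adjN a s, last a s = b & all (mem Vn) s].
Proof.
move=> aV; elim: k b => [|k IH] b /=.
  by rewrite inE => /eqP->; exists [::].
rewrite mem_undup mem_cat => /orP[/IH[s [Hs Hp Hl Ha]]|].
  by exists s; split => //; apply: leqW.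
case/flattenP => x /mapP[c cr ->] bN.
have [s [Hs Hp Hl Ha]] := IH c cr.
have cV : c \in Vn.
  have := mem_last a s; rewrite Hl inE => /orP[/eqP->//|cs].
  by have /allP := Ha; apply.
have /andP[Hab bV] := nbN_adj cV bN.
exists (rcons s b); rewrite size_rcons ltnS Hs rcons_path Hp Hl Hab last_rcons all_rcons /=.
by rewrite bV Ha.
Qed.

Lemma Vn_lt n : n \in Vn -> (n.1 < 15) && (n.2 < 15).
Proof.
rewrite VnE mem_filter => /andP[_ /allpairsP[[i j] [/= hi hj ->]]].
by rewrite -!in_pts hi hj.
Qed.
Lemma adjN_cheap a b : a \in Vn -> b \in Vn -> adjN a b -> perpN a.1 b.2 && perpN b.1 a.2.
Proof.
move=> /Vn_lt/andP[ha1 ha2] /Vn_lt/andP[hb1 hb2] /andP[_ /hasP[d _ Hd]].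
move: Hd.
case: a ha1 ha2 => [x u] /= ha1 ha2; case: b hb1 hb2 => [y v] /= hb1 hb2.
case: d => [z w]; rewrite /condN; cbv beta zeta iota delta [fst snd] => /and4P[_ _ _ /and4P[_ _ _ /andP[_ /allP H]]].
have := H v; rewrite in_pts hb2 => /(_ isT) /eqP.
rewrite /mem3 eqxx orbT /= => /esym /allP /(_ x); rewrite in_pts ha1 /mem3 eqxx /= => /(_ isT) ->.
have := H u; rewrite in_pts ha2 => /(_ isT) /eqP.
rewrite /mem3 eqxx /= => /esym /allP /(_ y); rewrite in_pts hb1 /mem3 eqxx orbT /= => /(_ isT) ->.
by [].
Qed.

Definition nw2N := [&& a0 \in Vn, b0 \in Vn, a0 != b0, ~~ adjN a0 b0,
  all (fun c => (perpN a0.1 c.2 && perpN c.1 a0.2) ==> ((c \in nbN a0) || ~~ adjN a0 c)) Vn &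
  all (fun c => (c \in nbN a0) ==> (~~ (perpN c.1 b0.2 && perpN b0.1 c.2) || ~~ adjN c b0)) Vn].
Lemma nw2N_ok : nw2N.
Proof. vm_compute. reflexivity. Qed.

Lemma within3V (A B : V) : exists s : seq V, [/\ size s <= 3, path adjF A s & last A s = B].
Proof.
have /allP/(_ _ (vn_in A)) := diamN_ok.
move/allP/(_ _ (vn_in B)) => Hr.
have [s [Hs Hp Hl Ha]] := reachN_path (vn_in A) Hr.
have [sV [E HpV]] := lift_path Hp Ha.
exists sV; split => //; first by rewrite -(size_map vn) E.
by apply: vn_inj; rewrite -last_map E.
Qed.

Lemma not_within2 (A B : V) : vn A = a0 -> vn B = b0 ->
  forall s, size s <= 2 -> path adjF A s -> last A s = B -> False.
Proof.
move=> EA EB; have /and3P[aV bV /and4P[ab nab H1 H2]] := nw2N_ok.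
case=> [|c [|d [|? ?]]] //= _.
- by move=> _ E; move: ab; rewrite -EA -EB E eqxx.
- by rewrite andbT adjFN EA => H E; move: nab; rewrite -EB -E H.
rewrite andbT => /andP[Hc Hd] E; subst d.
move: Hc Hd; rewrite !adjFN EA EB => Hc Hd.
have cV := vn_in c.
have /allP/(_ _ cV)/implyP := H1; rewrite (adjN_cheap aV cV Hc) Hc orbF => /(_ isT) cN.
have /allP/(_ _ cV)/implyP/(_ cN) := H2.
by rewrite (adjN_cheap cV bV Hd) Hd.
Qed.


Theorem corollary3p4 (P P' : finType) (L : {set {set P}}) (L' : {set {set P'}}) (f : P -> P') :
  is_GQ22 L -> is_GQ22 L' -> is_iso L L' f ->
  (* connected *)
  (forall a b : calP L' f, connect (calAdj L L' f) a b) /\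
  (* diameter 3: every two vertices at distance <= 3, some pair at distance > 2 *)
  (forall a b : calP L' f, within L L' f 3 a b) /\
  (exists a b : calP L' f, ~ within L L' f 2 a b).
Proof.
move=> HS _ [[fi fK fiK] HL'].
have [g [[gi gK giK] HL]] := GQ_iso HS.
pose Ph := Phi gK giK fK fiK HL HL'.
pose Pi := Phiinv gK giK fK fiK HL HL'.
have PhK : cancel Pi Ph := PhiK gK giK fK fiK HL HL'.
have PiK : cancel Ph Pi := PhiinvK gK giK fK fiK HL HL'.
have adjP : forall a b, calAdj L L' f (Ph a) (Ph b) = adjF a b := adjPhi gK giK fK fiK HL HL'.
have W3 : forall a b : calP L' f, within L L' f 3 a b.
  move=> a b; have [s [Hs Hp Hl]] := within3V (Pi a) (Pi b).
  exists (map Ph s); split; first by rewrite size_map.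
  split; last by rewrite -[a in last a _]PhK last_map Hl PhK.
  rewrite -{1}(PhK a); apply: (path_map_rel _ Hp) => x y.
  by rewrite adjP.
split; [|split] => //.
  move=> a b; have [s [_ [Hp Hl]]] := W3 a b; apply/connectP; exists s; [exact: Hp | by rewrite Hl].
have /and3P[aV bV _] := nw2N_ok.
have [A EA] := Vn_dec aV; have [B EB] := Vn_dec bV.
exists (Ph A), (Ph B) => [[s [Hs [Hp Hl]]]].
apply: (not_within2 EA EB (s := map Pi s)); first by rewrite size_map.
  rewrite -[A in path _ A _]PiK; apply: (path_map_rel _ Hp) => x y.
  by rewrite -adjP !PhK.
by rewrite -[A in last A _]PiK last_map Hl PiK.
Qed.
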